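(* Let $(\mathbb{T}_n)$ be the sequence of dyadic partitions and let $\alpha>0$ be irrational and fixed. (a) If $\bm f\in\mathscr{F}$, then $y_\alpha^{\bm f}$ admits the linear quadratic variation $\langle y_\alpha^{\bm f}\rangle_t=t\int_0^1f_\infty^2(s)\,ds$ for $t\in[0,1]$. (b) If $\bm f,\bm g\in\mathscr{F}$, then $y_\alpha^{\bm f}$ and $y_\alpha^{\bm g}$ admit the linear covariation $\langle y_\alpha^{\bm f},y_\alpha^{\bm g}\rangle_t=t\int_0^1f_\infty(s)g_\infty(s)\,ds$ for $t\in[0,1]$. In particular, $\{y_\alpha^{\bm f}:\bm f\in\mathscr{F}\}$ is a vector space of functions admitting a linear quadratic variation.
   Context: Dyadic partitions: $\mathbb{T}_n=\{k2^{-n}:k=0,\dots,2^n\}$. For $s\in\mathbb{T}_n$, $s'$ is the successor of $s$ in $\mathbb{T}_n$ ($s'=1$ if $s=1$). For $x,y\in C[0,1]$, $\langle x,y\rangle^n_t:=\sum_{s\in\mathbb{T}_n,\,s\le t}(x(s')-x(s))(y(s')-y(s))$; the covariation is $\langle x,y\rangle_t=\lim_n\langle x,y\rangle^n_t$ and the quadratic variation $\langle x\rangle_t=\langle x,x\rangle_t$, whenever the limits exist. Faber--Schauder functions: $e_{0,0}(t)=\max\{0,\min\{t,1-t\}\}$, $e_{n,k}(t)=2^{-n/2}e_{0,0}(2^nt-k)$ for $n\ge1$, $k=0,\dots,2^n-1$. $\mathscr{F}$ is the class of sequences $\bm f=(f_n)_{n\ge0}$ of bounded functions $f_n:[0,1]\to\mathbb{R}$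 converging uniformly to a Riemann integrable function $f_\infty$. For $t\ge0$, $t \bmod 1:=t-\lfloor t\rfloor$. For $\bm f\in\mathscr{F}$ and $\alpha>0$, $\vartheta_{n,k}(\alpha,\bm f):=f_n(\alpha k\bmod 1)$ and $y_\alpha^{\bm f}:=\sum_{n=0}^\infty\sum_{k=0}^{2^n-1}\vartheta_{n,k}(\alpha,\bm f)e_{n,k}$. *)

(* Defs.v *)
From Stdlib Require Import Reals Lra Lia.
From Coquelicot Require Import Coquelicot.
Open Scope R_scope.

(* t mod 1 := t - floor t  (Int_part is the floor on R) *)
Definition mod1 (t : R) : R := t - IZR (Int_part t).

Definition e00 (t : R) : R := Rmax 0 (Rmin t (1 - t)).
Definition ef (n k : nat) (t : R) : R := / sqrt (2 ^ n) * e00 (2 ^ n * t - INR k).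

Definition theta (alpha : R) (f : nat -> R -> R) (n k : nat) : R :=
  f n (mod1 (alpha * INR k)).

Definition y (alpha : R) (f : nat -> R -> R) (t : R) : R :=
  Series (fun n => sum_n (fun k => theta alpha f n k * ef n k t) (2 ^ n - 1)%nat).

(* successor of s = k 2^{-n} in T_n (s' = 1 if s = 1) *)
Definition dyad (n k : nat) : R := INR k / 2 ^ n.
Definition dsucc (n k : nat) : R := Rmin (INR (S k) / 2 ^ n) 1.

Definition covn (n : nat) (x z : R -> R) (t : R) : R :=
  sum_n (fun k => if Rle_dec (dyad n k) t
                  then (x (dsucc n k) - x (dyad n k)) * (z (dsucc n k) - z (dyad n k))
                  else 0) (2 ^ n)%nat.

Definition inF (f : nat -> R -> R) (finf : R -> R) : Prop :=
  (forall n, exists M, forall x, 0 <= x <= 1 -> Rabs (f n x) <= M) /\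
  (forall eps, 0 < eps -> exists N, forall n x, (N <= n)%nat -> 0 <= x <= 1 ->
       Rabs (f n x - finf x) < eps) /\
  ex_RInt finf 0 1.

Definition irrational (a : R) : Prop :=
  ~ exists p q : Z, q <> 0%Z /\ a = IZR p / IZR q.

(* Main.v *)
Require Import Defs.
From Stdlib Require Import Reals Lra Lia Arith ZArith Classical ClassicalEpsilon.
From Coquelicot Require Import Coquelicot.
Open Scope R_scope.

Fixpoint S0 (F : nat -> R) (n : nat) : R :=
  match n with O => 0 | S n' => S0 F n' + F n' end.

Lemma S0_ext F G n : (forall i, (i < n)%nat -> F i = G i) -> S0 F n = S0 G n.
Proof. induction n; simpl; intros H; auto. rewrite IHn; [rewrite H|]; auto; intros; apply H; lia. Qed.

Lemma S0_plus F G n : S0 (fun i => F i + G i) n = S0 F n + S0 G n.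
Proof. induction n; simpl; [lra|]. rewrite IHn; lra. Qed.

Lemma S0_scal c F n : S0 (fun i => c * F i) n = c * S0 F n.
Proof. induction n; simpl; [lra|]. rewrite IHn; lra. Qed.

Lemma S0_opp F n : S0 (fun i => - F i) n = - S0 F n.
Proof. induction n; simpl; [lra|]. rewrite IHn; lra. Qed.

Lemma S0_const c n : S0 (fun _ => c) n = INR n * c.
Proof. induction n; simpl; [lra|]. rewrite IHn; destruct n; simpl; lra. Qed.

Lemma S0_le F G n : (forall i, (i < n)%nat -> F i <= G i) -> S0 F n <= S0 G n.
Proof. induction n; simpl; intros H; [lra|]. assert (F n <= G n) by (apply H; lia).
  assert (S0 F n <= S0 G n) by (apply IHn; intros; apply H; lia). lra. Qed.

Lemma S0_abs F n : Rabs (S0 F n) <= S0 (fun i => Rabs (F i)) n.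
Proof. induction n; simpl. rewrite Rabs_R0; lra.
  eapply Rle_trans; [apply Rabs_triang|]. lra. Qed.

Lemma S0_shift F n : S0 F (S n) = F O + S0 (fun i => F (S i)) n.
Proof. induction n; simpl in *; [lra|]. rewrite IHn; lra. Qed.

Lemma S0_swap (G : nat -> nat -> R) N K :
  S0 (fun i => S0 (fun c => G i c) K) N = S0 (fun c => S0 (fun i => G i c) N) K.
Proof. induction N; simpl.
  - induction K; simpl; lra.
  - rewrite IHN. rewrite <- S0_plus. reflexivity. Qed.

Lemma S0_S F n : S0 F (S n) = S0 F n + F n.
Proof. reflexivity. Qed.

Lemma S0_double F n : S0 F (2 * n) = S0 (fun i => F (2 * i)%nat + F (S (2 * i))) n.
Proof. induction n. simpl; lra.
  replace (2 * S n)%nat with (S (S (2 * n))) by lia.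
  change (S0 F (S (S (2 * n)))) with (S0 F (2 * n) + F (2 * n)%nat + F (S (2 * n))).
  rewrite IHn. rewrite (S0_S (fun i => _) n). lra. Qed.

Lemma S0_delta (v : R) i n : (i < n)%nat ->
  S0 (fun k => if Nat.eq_dec k i then v else 0) n = v.
Proof. induction n; intros H; [lia|]. simpl.
  destruct (Nat.eq_dec n i).
  - subst. rewrite (S0_ext _ (fun _ => 0)). rewrite S0_const; lra.
    intros k Hk; destruct (Nat.eq_dec k i); [lia|auto].
  - rewrite IHn; [lra|lia]. Qed.



Lemma S0_nonneg F n : (forall i, (i < n)%nat -> 0 <= F i) -> 0 <= S0 F n.
Proof. induction n; simpl; intros H; [lra|].
  assert (0 <= F n) by (apply H; lia). assert (0 <= S0 F n) by (apply IHn; intros; apply H; lia). lra. Qed.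

Lemma sum_n_S0 (F : nat -> R) n : sum_n F n = S0 F (S n).
Proof. induction n. rewrite sum_O; simpl; lra.
  rewrite sum_Sn, IHn. simpl. unfold plus; simpl. lra. Qed.

Lemma S0_split F n m : S0 F (n + m) = S0 F n + S0 (fun i => F (n + i)%nat) m.
Proof. induction m; simpl. rewrite Nat.add_0_r; lra.
  rewrite Nat.add_succ_r; simpl. rewrite IHm; lra. Qed.

Lemma pow2_pos_nat n : (1 <= 2 ^ n)%nat.
Proof. induction n; simpl; lia. Qed.

Lemma e00_out z : z <= 0 \/ 1 <= z -> e00 z = 0.
Proof. unfold e00, Rmax, Rmin; intros H; repeat destruct Rle_dec; lra. Qed.
Lemma e00_lin1 z : 0 <= z <= /2 -> e00 z = z.
Proof. unfold e00, Rmax, Rmin; intros H; repeat destruct Rle_dec; lra. Qed.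
Lemma e00_lin2 z : /2 <= z <= 1 -> e00 z = 1 - z.
Proof. unfold e00, Rmax, Rmin; intros H; repeat destruct Rle_dec; lra. Qed.
Lemma e00_ge0 z : 0 <= e00 z.
Proof. unfold e00, Rmax, Rmin; repeat destruct Rle_dec; lra. Qed.
Lemma e00_le z : e00 z <= /2.
Proof. unfold e00, Rmax, Rmin; repeat destruct Rle_dec; lra. Qed.

Lemma e00_nat a b : e00 (INR a - INR b) = 0.
Proof. apply e00_out. destruct (le_lt_dec a b) as [H|H].
  - left. apply le_INR in H; lra.
  - right. apply le_INR in H. rewrite S_INR in H. lra. Qed.

Lemma pow2_gt0 n : 0 < 2 ^ n.
Proof. apply pow_lt; lra. Qed.

Lemma ef_dyad_zero n m k j : (m <= n)%nat -> ef n k (INR j / 2 ^ m) = 0.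
Proof. intros H. unfold ef. replace n with ((n - m) + m)%nat by lia.
  rewrite pow_add. replace (2 ^ (n - m) * 2 ^ m * (INR j / 2 ^ m)) with (INR (2 ^ (n - m) * j)).
  rewrite e00_nat; lra.
  rewrite mult_INR, pow_INR. simpl INR. replace (1+1) with 2 by lra. field.
  apply Rgt_not_eq, pow2_gt0. Qed.

Lemma e00_mid3 (w H : R) : 2 <= H ->
  (w + 1 <= 0 \/ (0 <= w /\ w + 1 <= H / 2) \/ (H / 2 <= w /\ w + 1 <= H) \/ H <= w) ->
  e00 ((w + /2) / H) = (e00 (w / H) + e00 ((w + 1) / H)) / 2.
Proof. intros HH C. unfold Rdiv. set (u := / H).
  assert (Hu : 0 < u) by (apply Rinv_0_lt_compat; lra).
  assert (Hu1 : H * u = 1) by (unfold u; field; lra).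
  destruct C as [C|[C|[C|C]]].
  - rewrite !e00_out; try lra; left; nra.
  - rewrite !e00_lin1; try lra; split; nra.
  - rewrite !e00_lin2; try lra; split; nra.
  - rewrite !e00_out; try lra; right; nra. Qed.

Lemma ef_mid_lower n m k i : (n < m)%nat ->
  ef n k (INR (S (2 * i)) / 2 ^ (S m)) = (ef n k (INR i / 2 ^ m) + ef n k (INR (S i) / 2 ^ m)) / 2.
Proof. intros Hnm. unfold ef.
  set (r := (m - n)%nat). assert (Hm : m = (n + r)%nat) by (unfold r; lia).
  assert (Hr : (1 <= r)%nat) by (unfold r; lia). clearbody r. subst m.
  set (H' := (2 ^ (r - 1))%nat).
  assert (H2 : (2 ^ r = 2 * H')%nat) by (unfold H'; destruct r; [lia|]; simpl; rewrite Nat.sub_0_r; lia).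
  assert (H'1 : (1 <= H')%nat) by (apply pow2_pos_nat).
  set (H := 2 ^ r).
  assert (HH : H = 2 * INR H') by (unfold H; rewrite <- (pow_INR 2), H2, mult_INR; simpl; lra).
  set (w := INR i - INR k * H).
  assert (E0 : 2 ^ n * (INR i / 2 ^ (n + r)) - INR k = w / H).
  { unfold w, H. rewrite pow_add. field. split; apply Rgt_not_eq, pow2_gt0. }
  assert (E1 : 2 ^ n * (INR (S (2 * i)) / 2 ^ S (n + r)) - INR k = (w + /2) / H).
  { unfold w, H. rewrite S_INR, mult_INR. simpl pow. rewrite pow_add. simpl INR. field. split; apply Rgt_not_eq, pow2_gt0. }
  assert (E2 : 2 ^ n * (INR (S i) / 2 ^ (n + r)) - INR k = (w + 1) / H).
  { unfold w, H. rewrite S_INR. rewrite pow_add. field. split; apply Rgt_not_eq, pow2_gt0. }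
  rewrite E0, E1, E2. rewrite e00_mid3. field.
  all: try (apply Rgt_not_eq, sqrt_lt_R0, pow2_gt0).
  assert (1 <= INR H') by (apply (le_INR 1); exact H'1); lra.
  set (kH := (k * (2 * H'))%nat).
  assert (EkH : INR kH = INR k * H) by (unfold kH; rewrite mult_INR, HH, mult_INR; simpl; lra).
  assert (C : (i + 1 <= kH \/ (kH <= i /\ i + 1 <= kH + H') \/ (kH + H' <= i /\ i + 1 <= kH + (H' + H')) \/ kH + (H' + H') <= i)%nat) by lia.
  unfold w. rewrite <- EkH.
  destruct C as [C|[C|[C|C]]].
  - left. apply le_INR in C. rewrite plus_INR in C. simpl in C. lra.
  - right; left. destruct C as [C1 C2]. apply le_INR in C1, C2. repeat rewrite plus_INR in C2. simpl in C2. lra.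
  - right; right; left. destruct C as [C1 C2]. apply le_INR in C1, C2. repeat rewrite plus_INR in C1. repeat rewrite plus_INR in C2. simpl in C1, C2. lra.
  - right; right; right. apply le_INR in C. repeat rewrite plus_INR in C. simpl in C. lra. Qed.

Lemma ef_mid_level m k i :
  ef m k (INR (S (2 * i)) / 2 ^ (S m)) = if Nat.eq_dec k i then / sqrt (2 ^ m) * / 2 else 0.
Proof. unfold ef.
  replace (2 ^ m * (INR (S (2 * i)) / 2 ^ S m) - INR k) with (INR i - INR k + /2).
  2:{ rewrite S_INR, mult_INR. simpl pow. simpl INR. field. apply Rgt_not_eq, pow2_gt0. }
  destruct (Nat.eq_dec k i).
  - subst. rewrite e00_lin1; [lra|lra].
  - rewrite e00_out. lra. destruct (le_lt_dec k i).
    + right. assert (k < i)%nat by lia. apply le_INR in H. rewrite S_INR in H. lra.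
    + left. apply le_INR in l. rewrite S_INR in l. lra. Qed.

Definition inner alpha f n t := sum_n (fun k => theta alpha f n k * ef n k t) (2 ^ n - 1).

Lemma inner_S0 alpha f n t : inner alpha f n t = S0 (fun k => theta alpha f n k * ef n k t) (2 ^ n).
Proof. unfold inner. rewrite sum_n_S0. f_equal. pose proof (pow2_pos_nat n); lia. Qed.

Definition Yp alpha f m t := S0 (fun n => inner alpha f n t) m.

Lemma y_dyad alpha f m j : y alpha f (INR j / 2 ^ m) = Yp alpha f m (INR j / 2 ^ m).
Proof. unfold y, Series.
  change (fun n => sum_n (fun k => theta alpha f n k * ef n k (INR j / 2 ^ m)) (2 ^ n - 1))
    with (fun n => inner alpha f n (INR j / 2 ^ m)).
  rewrite (Lim_seq_ext_loc _ (fun _ => Yp alpha f m (INR j / 2 ^ m))).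
  rewrite Lim_seq_const; reflexivity.
  exists m. intros N HN. rewrite sum_n_S0. replace (S N) with (m + (S N - m))%nat by lia.
  rewrite S0_split. unfold Yp. rewrite (S0_ext (fun i => inner alpha f (m + i) _) (fun _ => 0)). rewrite S0_const; lra.
  intros i _. rewrite inner_S0. rewrite (S0_ext _ (fun _ => 0)). rewrite S0_const; lra.
  intros k _. rewrite ef_dyad_zero; [lra|lia]. Qed.

Definition Vy alpha f m j := y alpha f (INR j / 2 ^ m).

Lemma Vy_double alpha f m j : Vy alpha f (S m) (2 * j) = Vy alpha f m j.
Proof. unfold Vy. f_equal. rewrite mult_INR. simpl pow. simpl INR. field. apply Rgt_not_eq, pow2_gt0. Qed.

Lemma inner_mid_lower alpha f n m i : (n < m)%nat ->
  inner alpha f n (INR (S (2 * i)) / 2 ^ (S m)) =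
  (inner alpha f n (INR i / 2 ^ m) + inner alpha f n (INR (S i) / 2 ^ m)) / 2.
Proof. intros H. rewrite !inner_S0. rewrite (S0_ext _ (fun k => / 2 * (theta alpha f n k * ef n k (INR i / 2 ^ m)) + /2 * (theta alpha f n k * ef n k (INR (S i) / 2 ^ m)))).
  rewrite S0_plus, !S0_scal. lra.
  intros k _. rewrite ef_mid_lower; [lra|auto]. Qed.

Lemma inner_mid_level alpha f m i : (i < 2 ^ m)%nat ->
  inner alpha f m (INR (S (2 * i)) / 2 ^ (S m)) = theta alpha f m i * (/ sqrt (2 ^ m) * / 2).
Proof. intros H. rewrite inner_S0.
  rewrite (S0_ext _ (fun k => if Nat.eq_dec k i then theta alpha f m i * (/ sqrt (2 ^ m) * / 2) else 0)).
  apply S0_delta; auto.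
  intros k _. rewrite ef_mid_level. destruct (Nat.eq_dec k i); [subst; auto|lra]. Qed.

Lemma Vy_mid alpha f m i : (i < 2 ^ m)%nat ->
  Vy alpha f (S m) (S (2 * i)) = (Vy alpha f m i + Vy alpha f m (S i)) / 2 + theta alpha f m i * (/ sqrt (2 ^ m) * / 2).
Proof. intros H. unfold Vy. rewrite !y_dyad. unfold Yp. rewrite S0_S.
  rewrite inner_mid_level; auto. f_equal.
  rewrite (S0_ext _ (fun n => /2 * inner alpha f n (INR i / 2 ^ m) + /2 * inner alpha f n (INR (S i) / 2 ^ m))).
  rewrite S0_plus, !S0_scal. lra.
  intros n Hn. rewrite inner_mid_lower; [lra|auto]. Qed.

Definition Dv alpha f m j := Vy alpha f m (S j) - Vy alpha f m j.

Definition cm m := / sqrt (2 ^ m) * / 2.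

Lemma Dv_even alpha f m i : (i < 2 ^ m)%nat ->
  Dv alpha f (S m) (2 * i) = Dv alpha f m i / 2 + theta alpha f m i * cm m.
Proof. intros H. unfold Dv, cm. rewrite Vy_mid; auto. rewrite Vy_double. lra. Qed.

Lemma Dv_odd alpha f m i : (i < 2 ^ m)%nat ->
  Dv alpha f (S m) (S (2 * i)) = Dv alpha f m i / 2 - theta alpha f m i * cm m.
Proof. intros H. unfold Dv, cm. rewrite Vy_mid; auto.
  replace (S (S (2 * i))) with (2 * S i)%nat by lia. rewrite Vy_double. lra. Qed.

Lemma Dv_0 alpha f : Dv alpha f 0 0 = 0.
Proof. unfold Dv, Vy. rewrite !y_dyad. unfold Yp. simpl. lra. Qed.

Lemma sqrt2_facts : sqrt 2 * sqrt 2 = 2 /\ 0 < sqrt 2.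
Proof. split. apply sqrt_sqrt; lra. apply sqrt_lt_R0; lra. Qed.

Lemma sqrt_pow2_pos m : 0 < sqrt (2 ^ m).
Proof. apply sqrt_lt_R0, pow2_gt0. Qed.

Lemma sqrt_pow2_S m : sqrt (2 ^ S m) = sqrt 2 * sqrt (2 ^ m).
Proof. simpl pow. apply sqrt_mult; [lra|left; apply pow2_gt0]. Qed.

Lemma Dv_bound alpha f B : (forall n k, Rabs (theta alpha f n k) <= B) ->
  forall m j, (j < 2 ^ m)%nat -> Rabs (Dv alpha f m j) <= 3 * B / sqrt (2 ^ m).
Proof. intros HB. assert (B0 : 0 <= B) by (specialize (HB O O); pose proof (Rabs_pos (theta alpha f 0 0)); lra).
  induction m; intros j Hj.
  - simpl in Hj. replace j with O by lia. rewrite Dv_0, Rabs_R0. simpl. rewrite sqrt_1. lra.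
  - assert (Hp : (2 ^ S m = 2 * 2 ^ m)%nat) by (simpl; lia).
    destruct sqrt2_facts as [S2 S2p]. pose proof (sqrt_pow2_pos m) as Sp.
    rewrite sqrt_pow2_S. set (s := sqrt (2 ^ m)) in *. set (r := sqrt 2) in *.
    assert (Hu : s * / s = 1) by (field; lra). assert (Hu0 : 0 < / s) by (apply Rinv_0_lt_compat; lra).
    assert (Hv : r * / r = 1) by (field; lra). assert (Hv0 : 0 < / r) by (apply Rinv_0_lt_compat; lra).
    assert (E : 3 * B / (r * s) = 3 * B * / r * / s) by (field; lra). rewrite E.
    assert (Hv2 : / r >= 2 / 3). { nra. }
    destruct (Nat.Even_or_Odd j) as [[i Hi]|[i Hi]].
    + subst j. rewrite Dv_even by lia. unfold cm. fold s.
      specialize (IHm i ltac:(lia)). specialize (HB m i).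
      unfold Rdiv in IHm. 
      eapply Rle_trans; [apply Rabs_triang|]. rewrite Rabs_mult, Rabs_div, (Rabs_right 2) by lra.
      rewrite (Rabs_right (/ s * / 2)) by nra.
      assert (Rabs (theta alpha f m i) * (/ s * / 2) <= B * (/s * /2)) by (apply Rmult_le_compat_r; nra).
      assert (0 <= B * /s * (/r - 2/3)) by (apply Rmult_le_pos; nra).
      unfold Rdiv. nra.
    + subst j. replace (2 * i + 1)%nat with (S (2 * i)) by lia. rewrite Dv_odd by lia. unfold cm. fold s.
      specialize (IHm i ltac:(lia)). specialize (HB m i).
      unfold Rdiv in IHm. unfold Rminus.
      eapply Rle_trans; [apply Rabs_triang|]. rewrite Rabs_Ropp, Rabs_mult, Rabs_div, (Rabs_right 2) by lra.
      rewrite (Rabs_right (/ s * / 2)) by nra.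
      assert (Rabs (theta alpha f m i) * (/ s * / 2) <= B * (/s * /2)) by (apply Rmult_le_compat_r; nra).
      assert (0 <= B * /s * (/r - 2/3)) by (apply Rmult_le_pos; nra).
      unfold Rdiv. nra. Qed.

Definition isI m t I := (1 <= I <= 2 ^ m)%nat /\ INR (I - 1) <= 2 ^ m * t /\ ((I < 2 ^ m)%nat -> 2 ^ m * t < INR I).

Lemma isI_ex m t : 0 <= t <= 1 -> exists I, isI m t I.
Proof. intros Ht. assert (H0 : 0 <= 2 ^ m * t) by (pose proof (pow2_gt0 m); nra).
  destruct (nfloor_ex _ H0) as [j [Hj1 Hj2]].
  pose proof (pow2_pos_nat m) as Hp.
  exists (Nat.min (S j) (2 ^ m)). split; [lia|split].
  - eapply Rle_trans; [|apply Hj1]. apply le_INR. lia.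
  - intros H. assert (E : Nat.min (S j) (2 ^ m) = S j) by lia. rewrite E, S_INR; lra. Qed.

Lemma pow2INR m : INR (2 ^ m) = 2 ^ m.
Proof. rewrite pow_INR. simpl INR. replace (1+1) with 2 by lra. reflexivity. Qed.

Lemma isI_step m t I I' : 0 <= t <= 1 -> isI m t I -> isI (S m) t I' -> (I' = 2 * I \/ I' = 2 * I - 1)%nat.
Proof. intros Ht [H1 [H2 H3]] [H1' [H2' H3']].
  assert (Hp : (2 ^ S m = 2 * 2 ^ m)%nat) by (simpl; lia).
  assert (Rp : 2 ^ S m = 2 * 2 ^ m) by (simpl; lra).
  rewrite Rp in H2', H3'. rewrite Hp in H1', H3'.
  assert (A : (2 * I - 1 <= I')%nat).
  { destruct (Nat.lt_ge_cases I' (2 * 2 ^ m)) as [L|L]; [|lia].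
    specialize (H3' L). assert (INR (2 * (I - 1)) < INR I') by (rewrite mult_INR; simpl; lra).
    apply INR_lt in H. lia. }
  assert (B : (I' <= 2 * I)%nat).
  { destruct (Nat.lt_ge_cases I (2 ^ m)) as [L|L]; [|lia].
    specialize (H3 L). assert (INR (I' - 1) < INR (2 * I)) by (rewrite mult_INR; simpl; lra).
    apply INR_lt in H. lia. }
  lia. Qed.

Definition Em alpha f g m I := S0 (fun j => Dv alpha f m j * Dv alpha g m j) I.
Definition Am alpha f g m I := S0 (fun i => theta alpha f m i * theta alpha g m i) I.

Lemma dyad_le n k t : dyad n k <= t <-> INR k <= 2 ^ n * t.
Proof. unfold dyad. pose proof (pow2_gt0 n). split; intros H'.
  - apply (Rmult_le_compat_l (2 ^ n)) in H'; [|lra]. replace (2 ^ n * (INR k / 2 ^ n)) with (INR k) in H' by (field; lra). lra.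
  - apply (Rmult_le_reg_l (2 ^ n)); [lra|]. replace (2 ^ n * (INR k / 2 ^ n)) with (INR k) by (field; lra). lra. Qed.

Lemma dsucc_lt n k : (k < 2 ^ n)%nat -> dsucc n k = INR (S k) / 2 ^ n.
Proof. intros H. unfold dsucc. apply Rmin_left. pose proof (pow2_gt0 n).
  apply (Rmult_le_reg_l (2 ^ n)); [lra|]. replace (2 ^ n * (INR (S k) / 2 ^ n)) with (INR (S k)) by (field; lra).
  rewrite <- pow2INR. rewrite Rmult_1_r. apply le_INR. lia. Qed.

Lemma dsucc_last n : dsucc n (2 ^ n) = dyad n (2 ^ n).
Proof. unfold dsucc, dyad. rewrite pow2INR. pose proof (pow2_gt0 n).
  replace (2 ^ n / 2 ^ n) with 1 by (field; lra). apply Rmin_right.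
  apply (Rmult_le_reg_l (2 ^ n)); [lra|]. replace (2 ^ n * (INR (S (2 ^ n)) / 2 ^ n)) with (INR (S (2 ^ n))) by (field; lra).
  rewrite S_INR, pow2INR. lra. Qed.

Lemma covn_E alpha f g n t I : isI n t I ->
  covn n (y alpha f) (y alpha g) t = Em alpha f g n I.
Proof. intros [H1 [H2 H3]]. unfold covn. rewrite sum_n_S0.
  replace (S (2 ^ n)) with (I + (S (2 ^ n) - I))%nat by lia. rewrite S0_split.
  rewrite (S0_ext (fun i => if Rle_dec (dyad n (I + i)) t then _ else _) (fun _ => 0)).
  rewrite S0_const, Rmult_0_r, Rplus_0_r. unfold Em. apply S0_ext.
  - intros j Hj. destruct (Rle_dec (dyad n j) t) as [D|D].
    + rewrite dsucc_lt by lia. unfold Dv, Vy, dyad. reflexivity.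
    + exfalso. apply D. apply dyad_le. eapply Rle_trans; [|apply H2]. apply le_INR; lia.
  - intros i Hi. destruct (Rle_dec (dyad n (I + i)) t) as [D|D]; [|reflexivity].
    destruct (Nat.eq_dec (I + i) (2 ^ n)) as [E|E].
    + rewrite E, dsucc_last. ring.
    + exfalso. apply dyad_le in D. assert (L : (I < 2 ^ n)%nat) by lia. specialize (H3 L).
      assert (INR I <= INR (I + i)) by (apply le_INR; lia). lra. Qed.

Lemma Em_double alpha f g m I : (I <= 2 ^ m)%nat ->
  Em alpha f g (S m) (2 * I) = Em alpha f g m I / 2 + Am alpha f g m I / 2 ^ (S m).
Proof. intros HI. unfold Em, Am. rewrite S0_double.
  assert (Hc : 2 * cm m * cm m = / 2 ^ S m).
  { unfold cm. pose proof (sqrt_pow2_pos m).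
    assert (sqrt (2 ^ m) * sqrt (2 ^ m) = 2 ^ m) by (apply sqrt_sqrt; left; apply pow2_gt0).
    set (s := sqrt (2 ^ m)) in *. simpl pow. rewrite <- H0. field. lra. }
  rewrite (S0_ext _ (fun i => / 2 * (Dv alpha f m i * Dv alpha g m i) + / 2 ^ S m * (theta alpha f m i * theta alpha g m i))).
  rewrite S0_plus, !S0_scal. unfold Rdiv. ring.
  intros i Hi. rewrite Dv_even, Dv_odd, Dv_even, Dv_odd by lia. rewrite <- Hc. field. Qed.

Lemma half_pow_lim : is_lim_seq (fun n => (/2) ^ n) 0.
Proof. apply is_lim_seq_geom. rewrite Rabs_right; lra. Qed.

Lemma contract (x b : nat -> R) L : (forall m, x (S m) = x m / 2 + b m) ->
  is_lim_seq b (L / 2) -> is_lim_seq x L.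
Proof. intros Hx Hb. apply is_lim_seq_spec in Hb. apply is_lim_seq_spec. intros eps.
  assert (e4 : 0 < eps / 4) by (destruct eps; simpl; lra).
  destruct (Hb (mkposreal _ e4)) as [N HN]. simpl in HN.
  set (z0 := Rabs (x N - L)).
  assert (Hk : forall k, Rabs (x (N + k)%nat - L) <= z0 * (/2) ^ k + eps / 2).
  { induction k. rewrite Nat.add_0_r. simpl. unfold z0. destruct eps; simpl; lra.
    rewrite Nat.add_succ_r, Hx. specialize (HN (N + k)%nat ltac:(lia)).
    replace (x (N + k)%nat / 2 + b (N + k)%nat - L) with ((x (N + k)%nat - L) / 2 + (b (N + k)%nat - L / 2)) by field.
    eapply Rle_trans; [apply Rabs_triang|]. rewrite Rabs_div, (Rabs_right 2) by lra. simpl pow. lra. }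
  pose proof half_pow_lim as G. apply is_lim_seq_spec in G.
  assert (e2 : 0 < eps / (2 * (z0 + 1))) by (unfold z0; pose proof (Rabs_pos (x N - L)); destruct eps; simpl; apply Rdiv_lt_0_compat; lra).
  destruct (G (mkposreal _ e2)) as [K HK]. simpl in HK.
  exists (N + K)%nat. intros n Hn. replace n with (N + (n - N))%nat by lia.
  eapply Rle_lt_trans; [apply Hk|].
  specialize (HK (n - N)%nat ltac:(lia)). rewrite Rminus_0_r, Rabs_right in HK by (left; apply pow_lt; lra).
  assert (0 <= z0) by apply Rabs_pos.
  assert (z0 * (/2) ^ (n - N) <= z0 * (eps / (2 * (z0 + 1)))) by (apply Rmult_le_compat_l; lra).
  assert (z0 * (eps / (2 * (z0 + 1))) < eps / 2).
  { unfold Rdiv. rewrite Rinv_mult. destruct eps as [e ep]; simpl in *.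
    assert (0 < / (z0 + 1)) by (apply Rinv_0_lt_compat; lra).
    assert (z0 * / (z0 + 1) < 1) by (apply (Rmult_lt_reg_r (z0 + 1)); [lra|]; field_simplify; lra).
    nra. }
  lra. Qed.

Lemma covn_limit alpha f g Bf Bg t L
  (Hf : forall n k, Rabs (theta alpha f n k) <= Bf)
  (Hg : forall n k, Rabs (theta alpha g n k) <= Bg)
  (Ht : 0 <= t <= 1) (Im : nat -> nat) (HI : forall m, isI m t (Im m))
  (HA : is_lim_seq (fun m => Am alpha f g m (Im m) / 2 ^ m) (t * L)) :
  is_lim_seq (fun m => covn m (y alpha f) (y alpha g) t) (t * L).
Proof.
  apply (is_lim_seq_ext (fun m => Em alpha f g m (Im m))).
  { intros m. symmetry. apply covn_E, HI. }
  set (x := fun m => Em alpha f g m (Im m)).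
  apply (contract x (fun m => x (S m) - x m / 2)); [intros; ring|].
  set (c := fun m => Am alpha f g m (Im m) / 2 ^ m / 2).
  set (e := fun m => 9 * Bf * Bg * (/2) ^ (S m)).
  assert (Hce : forall m, Rabs (x (S m) - x m / 2 - c m) <= e m).
  { intros m. destruct (HI m) as [H1 _]. destruct (isI_step m t (Im m) (Im (S m)) Ht (HI m) (HI (S m))) as [E|E].
    - unfold x. rewrite E, Em_double by lia. unfold c, e. cbv beta.
      match goal with |- Rabs ?X <= _ => replace X with 0 by (simpl pow; field; apply Rgt_not_eq, pow2_gt0) end.
      rewrite Rabs_R0. assert (0 <= Bf) by (specialize (Hf O O); pose proof (Rabs_pos (theta alpha f 0 0)); lra).
      assert (0 <= Bg) by (specialize (Hg O O); pose proof (Rabs_pos (theta alpha g 0 0)); lra).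
      assert (0 < (/2) ^ S m) by (apply pow_lt; lra). apply Rmult_le_pos; [|lra]. nra.
    - unfold x. rewrite E.
      assert (Ed : Em alpha f g (S m) (2 * Im m) = Em alpha f g (S m) (2 * Im m - 1) +
           Dv alpha f (S m) (2 * Im m - 1) * Dv alpha g (S m) (2 * Im m - 1)).
      { unfold Em. replace (2 * Im m)%nat with (S (2 * Im m - 1)) at 1 by lia. reflexivity. }
      rewrite Em_double in Ed by lia.
      assert (Ed2 : Em alpha f g (S m) (2 * Im m - 1) = Em alpha f g m (Im m) / 2 + Am alpha f g m (Im m) / 2 ^ S m -
           Dv alpha f (S m) (2 * Im m - 1) * Dv alpha g (S m) (2 * Im m - 1)) by lra.
      match goal with |- Rabs ?X <= _ => replace X with
        (- (Dv alpha f (S m) (2 * Im m - 1) * Dv alpha g (S m) (2 * Im m - 1)))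
        by (unfold c; cbv beta; rewrite Ed2; simpl pow; field; apply Rgt_not_eq, pow2_gt0) end.
      rewrite Rabs_Ropp, Rabs_mult.
      assert (Hj : (2 * Im m - 1 < 2 ^ S m)%nat) by (simpl; lia).
      pose proof (Dv_bound alpha f Bf Hf (S m) _ Hj) as B1.
      pose proof (Dv_bound alpha g Bg Hg (S m) _ Hj) as B2.
      assert (Hs : sqrt (2 ^ S m) * sqrt (2 ^ S m) = 2 ^ S m) by (apply sqrt_sqrt; left; apply pow2_gt0).
      pose proof (sqrt_pow2_pos (S m)) as Hsp. set (s := sqrt (2 ^ S m)) in *.
      unfold e. rewrite <- Rinv_pow by lra. rewrite <- Hs.
      eapply Rle_trans; [apply Rmult_le_compat; try apply Rabs_pos; [apply B1|apply B2]|].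
      right. field. lra. }
  assert (Hc : is_lim_seq c (t * L / 2)).
  { unfold c. apply (is_lim_seq_scal_r _ (/2)) in HA. simpl in HA. exact HA. }
  assert (He : is_lim_seq e 0).
  { unfold e. pose proof half_pow_lim as H0. apply (is_lim_seq_scal_l _ (9 * Bf * Bg)) in H0.
    apply is_lim_seq_incr_1 in H0. simpl in H0. rewrite Rmult_0_r in H0. exact H0. }
  apply (is_lim_seq_le_le (fun m => c m - e m) _ (fun m => c m + e m)).
  - intros m. specialize (Hce m). apply Rabs_le_between' in Hce. lra.
  - replace (t * L / 2) with (t * L / 2 - 0) by ring. apply is_lim_seq_minus'; auto.
  - replace (t * L / 2) with (t * L / 2 + 0) by ring. apply is_lim_seq_plus'; auto. Qed.

Lemma Int_part_unique x k : IZR k <= x < IZR k + 1 -> Int_part x = k.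
Proof. intros [H1 H2]. unfold Int_part. rewrite <- (tech_up x (k + 1)).
  lia. rewrite plus_IZR; lra. rewrite plus_IZR; lra. Qed.

Lemma mod1_range x : 0 <= mod1 x < 1.
Proof. unfold mod1. pose proof (base_Int_part x). lra. Qed.

Lemma mod1_int x z : mod1 (x + IZR z) = mod1 x.
Proof. unfold mod1. rewrite (Int_part_unique (x + IZR z) (Int_part x + z)).
  rewrite plus_IZR; ring. pose proof (base_Int_part x). rewrite plus_IZR; lra. Qed.

Lemma mod1_small x : 0 <= x < 1 -> mod1 x = x.
Proof. intros H. unfold mod1. rewrite (Int_part_unique x 0); simpl; lra. Qed.

Lemma mod1_neg x : -1 <= x < 0 -> mod1 x = x + 1.
Proof. intros H. rewrite <- (mod1_int x 1). apply mod1_small. simpl; lra. Qed.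

Lemma mod1_mod1 u v : mod1 (mod1 u - v) = mod1 (u - v).
Proof. unfold mod1 at 2. replace (u - IZR (Int_part u) - v) with ((u - v) + IZR (- Int_part u)) by (rewrite opp_IZR; ring).
  apply mod1_int. Qed.

Definition xs alpha i := mod1 (alpha * INR i).
Definition indc a l x : R := if Rlt_dec (mod1 (x - a)) l then 1 else 0.
Definition cnt alpha N a l := S0 (fun i => indc a l (xs alpha i)) N.

Lemma indc_01 a l x : 0 <= indc a l x <= 1.
Proof. unfold indc; destruct Rlt_dec; lra. Qed.

Lemma indc_shift alpha a l i : indc (a + alpha) l (xs alpha (S i)) = indc a l (xs alpha i).
Proof. unfold indc, xs. rewrite !mod1_mod1. rewrite S_INR.
  replace (alpha * (INR i + 1) - (a + alpha)) with (alpha * INR i - a) by ring. reflexivity. Qed.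

Lemma cnt_trans alpha N a l : Rabs (cnt alpha N (a + alpha) l - cnt alpha N a l) <= 1.
Proof. unfold cnt. destruct N. simpl. rewrite Rminus_0_r, Rabs_R0; lra.
  rewrite S0_shift. rewrite (S0_ext (fun i => indc (a + alpha) l (xs alpha (S i))) (fun i => indc a l (xs alpha i))).
  rewrite S0_S. pose proof (indc_01 (a + alpha) l (xs alpha 0)). pose proof (indc_01 a l (xs alpha N)).
  apply Rabs_le; lra. intros; apply indc_shift. Qed.

Lemma cnt_trans_k alpha N a l k : Rabs (cnt alpha N (a + INR k * alpha) l - cnt alpha N a l) <= INR k.
Proof. induction k. simpl. rewrite Rmult_0_l, Rplus_0_r, Rminus_diag, Rabs_R0; lra.
  rewrite S_INR. replace (a + (INR k + 1) * alpha) with ((a + INR k * alpha) + alpha) by ring.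
  pose proof (cnt_trans alpha N (a + INR k * alpha) l).
  apply Rabs_le_between' in H. apply Rabs_le_between' in IHk. apply Rabs_le; lra. Qed.

Lemma indc_per a l x z : indc (a + IZR z) l x = indc a l x.
Proof. unfold indc. replace (x - (a + IZR z)) with ((x - a) + IZR (- z)) by (rewrite opp_IZR; ring).
  rewrite mod1_int. reflexivity. Qed.

Lemma cnt_per alpha N a l z : cnt alpha N (a + IZR z) l = cnt alpha N a l.
Proof. unfold cnt. apply S0_ext. intros; apply indc_per. Qed.


Lemma indc_add a l1 l2 x : 0 <= l1 -> 0 <= l2 -> l1 + l2 <= 1 ->
  indc a (l1 + l2) x = indc a l1 x + indc (a + l1) l2 x.
Proof. intros H1 H2 H3. unfold indc.
  replace (x - (a + l1)) with ((x - a) - l1) by ring. rewrite <- (mod1_mod1 (x - a) l1).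
  pose proof (mod1_range (x - a)). set (u := mod1 (x - a)) in *.
  destruct (Rlt_dec u l1).
  - rewrite (mod1_neg (u - l1)) by lra. destruct (Rlt_dec u (l1 + l2)); [|lra].
    destruct (Rlt_dec (u - l1 + 1) l2); lra.
  - rewrite (mod1_small (u - l1)) by lra.
    destruct (Rlt_dec u (l1 + l2)); destruct (Rlt_dec (u - l1) l2); lra. Qed.

Lemma cnt_add alpha N a l1 l2 : 0 <= l1 -> 0 <= l2 -> l1 + l2 <= 1 ->
  cnt alpha N a (l1 + l2) = cnt alpha N a l1 + cnt alpha N (a + l1) l2.
Proof. intros. unfold cnt. rewrite <- S0_plus. apply S0_ext. intros; apply indc_add; auto. Qed.

Lemma cnt_mono alpha N a l l' : l <= l' -> cnt alpha N a l <= cnt alpha N a l'.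
Proof. intros H. unfold cnt. apply S0_le. intros i _. unfold indc.
  destruct Rlt_dec; destruct Rlt_dec; lra. Qed.

Lemma cnt_ge0 alpha N a l : 0 <= cnt alpha N a l.
Proof. unfold cnt. apply S0_nonneg. intros; apply indc_01. Qed.

Lemma cnt_full alpha N a : cnt alpha N a 1 = INR N.
Proof. unfold cnt. rewrite (S0_ext _ (fun _ => 1)). rewrite S0_const; ring.
  intros i _. unfold indc. destruct Rlt_dec; auto. exfalso; apply n; apply mod1_range. Qed.

Lemma cnt_tile alpha N a b Rn : INR Rn * b <= 1 -> 0 <= b ->
  cnt alpha N a (INR Rn * b) = S0 (fun j => cnt alpha N (a + INR j * b) b) Rn.
Proof. intros H Hb. induction Rn.
  - simpl. rewrite Rmult_0_l. unfold cnt. rewrite (S0_ext _ (fun _ => 0)). rewrite S0_const; ring.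
    intros i _. unfold indc. destruct Rlt_dec; auto. pose proof (mod1_range (xs alpha i - a)); lra.
  - rewrite S0_S. rewrite <- IHRn. rewrite S_INR, Rmult_plus_distr_r, Rmult_1_l.
    apply cnt_add. apply Rmult_le_pos; [apply pos_INR|lra]. lra. rewrite S_INR in H; nra.
    rewrite S_INR in H. pose proof (pos_INR Rn). nra. Qed.

Lemma pigeon M (b : nat -> nat) : (forall i, (i <= M)%nat -> (b i < M)%nat) ->
  exists i j, (i < j <= M)%nat /\ b i = b j.
Proof. revert b. induction M; intros b Hb.
  - specialize (Hb O (le_n 0)). lia.
  - destruct (classic (exists i, (i <= M)%nat /\ b i = b (S M))) as [[i [Hi E]]|NE].
    + exists i, (S M). split; [lia|auto].
    + set (v := b (S M)).
      assert (Hv : (v < S M)%nat) by (apply Hb; lia).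
      assert (Hne : forall i, (i <= M)%nat -> b i <> v) by (intros i Hi E; apply NE; exists i; auto).
      set (b' := fun i => if Nat.ltb (b i) v then b i else (b i - 1)%nat).
      destruct (IHM b') as [i [j [Hij E]]].
      { intros i Hi. unfold b'. specialize (Hb i ltac:(lia)). specialize (Hne i Hi).
        destruct (Nat.ltb_spec (b i) v); lia. }
      exists i, j. split; [lia|]. unfold b' in E.
      pose proof (Hne i ltac:(lia)). pose proof (Hne j ltac:(lia)).
      destruct (Nat.ltb_spec (b i) v); destruct (Nat.ltb_spec (b j) v); lia. Qed.

Lemma irr_nonzero alpha q : irrational alpha -> (1 <= q)%nat -> mod1 (alpha * INR q) <> 0.
Proof. intros Hirr Hq E. apply Hirr. exists (Int_part (alpha * INR q)), (Z.of_nat q).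
  split; [lia|]. rewrite <- INR_IZR_INZ. unfold mod1 in E.
  assert (0 < INR q) by (apply lt_0_INR; lia).
  replace (IZR (Int_part (alpha * INR q))) with (alpha * INR q) by lra. field. lra. Qed.

Lemma mod1_sub_int x y : exists z, x - y = mod1 x - mod1 y + IZR z.
Proof. exists (Int_part x - Int_part y)%Z. unfold mod1. rewrite minus_IZR. ring. Qed.

Lemma dirichlet0 alpha (M : nat) : irrational alpha -> (1 <= M)%nat ->
  exists q, (1 <= q)%nat /\ (0 < mod1 (alpha * INR q) < / INR M \/ 1 - / INR M < mod1 (alpha * INR q) < 1).
Proof. intros Hirr HM.
  assert (HMr : 1 <= INR M) by (apply (le_INR 1); auto).
  set (b := fun i => Z.to_nat (Int_part (INR M * xs alpha i))).
  assert (Hb : forall i, IZR (Z.of_nat (b i)) <= INR M * xs alpha i < IZR (Z.of_nat (b i)) + 1).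
  { intros i. unfold b. pose proof (mod1_range (alpha * INR i)). fold (xs alpha i) in H.
    pose proof (base_Int_part (INR M * xs alpha i)).
    assert (0 <= IZR (Int_part (INR M * xs alpha i))).
    { assert (-1 < IZR (Int_part (INR M * xs alpha i))) by nra.
      assert (-1 < Int_part (INR M * xs alpha i))%Z by (apply lt_IZR; auto). apply IZR_le; lia. }
    rewrite Z2Nat.id by (apply le_IZR; auto). lra. }
  destruct (pigeon M b) as [i [j [Hij E]]].
  { intros i Hi. specialize (Hb i). pose proof (mod1_range (alpha * INR i)). fold (xs alpha i) in H.
    assert (IZR (Z.of_nat (b i)) < INR M) by nra. rewrite <- INR_IZR_INZ in H0. apply INR_lt; auto. }
  exists (j - i)%nat. split; [lia|].
  pose proof (Hb i) as Bi. pose proof (Hb j) as Bj. rewrite E in Bi.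
  assert (Hd : Rabs (xs alpha j - xs alpha i) < / INR M).
  { apply Rabs_def1; apply (Rmult_lt_reg_l (INR M)); try lra; field_simplify; lra. }
  destruct (mod1_sub_int (alpha * INR j) (alpha * INR i)) as [z Hz].
  replace (alpha * INR (j - i)) with ((xs alpha j - xs alpha i) + IZR z).
  2:{ rewrite minus_INR by lia. unfold xs. lra. }
  rewrite mod1_int.
  pose proof (irr_nonzero alpha (j - i) Hirr ltac:(lia)) as NZ.
  replace (alpha * INR (j - i)) with ((xs alpha j - xs alpha i) + IZR z) in NZ.
  2:{ rewrite minus_INR by lia. unfold xs. lra. }
  rewrite mod1_int in NZ.
  assert (/ INR M <= 1) by (rewrite <- Rinv_1; apply Rinv_le_contravar; lra).
  apply Rabs_def2 in Hd. destruct (Rle_lt_dec 0 (xs alpha j - xs alpha i)).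
  - rewrite mod1_small in * by lra. left; lra.
  - rewrite mod1_neg in * by lra. right; lra. Qed.

Lemma dirichlet alpha d : irrational alpha -> 0 < d ->
  exists q, (1 <= q)%nat /\ 0 < mod1 (alpha * INR q) < d.
Proof. intros Hirr Hd.
  destruct (nfloor_ex (/ d)) as [M0 [HM1 HM2]]. left; apply Rinv_0_lt_compat; auto.
  set (M := S M0). assert (HM : / INR M < d).
  { unfold M. rewrite S_INR. apply (Rmult_lt_reg_l (INR M0 + 1)). pose proof (pos_INR M0); lra.
    rewrite Rinv_r by (pose proof (pos_INR M0); lra).
    apply (Rmult_lt_reg_l (/ d)). apply Rinv_0_lt_compat; auto.
    field_simplify; lra. }
  assert (HMr : 1 <= INR M) by (unfold M; rewrite S_INR; pose proof (pos_INR M0); lra).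
  destruct (dirichlet0 alpha M Hirr ltac:(unfold M; lia)) as [q [Hq [C|C]]].
  - exists q; split; auto; lra.
  - set (g := mod1 (alpha * INR q)) in *. set (e := 1 - g).
    assert (He : 0 < e < / INR M) by (unfold e; lra).
    destruct (nfloor_ex (/ e)) as [L [HL1 HL2]]. left; apply Rinv_0_lt_compat; lra.
    assert (HeL1 : INR L * e <= 1).
    { apply (Rmult_le_reg_l (/ e)). apply Rinv_0_lt_compat; lra. field_simplify; lra. }
    assert (HeL2 : 1 < (INR L + 1) * e).
    { apply (Rmult_lt_reg_l (/ e)). apply Rinv_0_lt_compat; lra. field_simplify; lra. }
    assert (HL : (1 <= L)%nat).
    { destruct L; [|lia]. simpl in HeL2. assert (e < 1) by (assert (/ INR M <= 1) by (rewrite <- Rinv_1; apply Rinv_le_contravar; lra); lra). lra. }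
    exists (q * L)%nat. split; [lia|].
    assert (Eq : alpha * INR (q * L) = (- (INR L * e)) + IZR (Z.of_nat L * (1 + Int_part (alpha * INR q)))).
    { rewrite mult_INR, mult_IZR, plus_IZR, <- INR_IZR_INZ. unfold e, g, mod1. simpl IZR. ring. }
    pose proof (irr_nonzero alpha (q * L) Hirr ltac:(lia)) as NZ.
    rewrite Eq, mod1_int in *.
    assert (INR L * e <> 1).
    { intros E1. apply NZ. rewrite E1. replace (Ropp 1) with (0 + IZR (-1)) by (simpl; lra). rewrite mod1_int, mod1_small; lra. }
    assert (0 < INR L * e) by (assert (1 <= INR L) by (apply (le_INR 1); auto); nra).
    rewrite mod1_neg by lra. split; lra. Qed.

Lemma final_arith (b P Rr l Nr c Q X : R) :
  0 < b -> b <= /2 -> 1 <= P -> P * b <= 1 -> 1 < (P + 1) * b ->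
  0 <= Rr <= P -> Rr * b <= l < (Rr + 1) * b -> 0 <= l <= 1 -> 0 <= Nr -> 0 <= Q -> 0 <= c ->
  P * c - P * P * Q <= Nr -> Nr <= P * c + P * P * Q + c + P * Q ->
  Rr * c - Rr * Rr * Q <= X -> X <= Rr * c + Rr * Rr * Q + c + Rr * Q ->
  Rabs (X - Nr * l) <= 4 * b * Nr + 3 * (P * P + P) * Q.
Proof. intros.
  assert (L1 : (P + 1) * (l - 2 * b) <= Rr).
  { destruct (Rle_lt_dec (l - 2 * b) 0). nra.
    assert ((P + 1) * b * (l - 2 * b) <= (1 + b) * (l - 2 * b)) by (apply Rmult_le_compat_r; lra).
    assert (Z : (P + 1) * (l - 2 * b) * b < Rr * b) by nra.
    apply Rmult_lt_reg_r in Z; lra. }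
  assert (L2 : Rr + 1 <= P * (l + 4 * b)).
  { assert (Z : (Rr + 1) * b <= P * (l + 4 * b) * b).
    { assert (P * b * (l + 4 * b) >= (1 - b) * (l + 4 * b)) by (apply Rmult_ge_compat_r; nra).
      nra. }
    apply Rmult_le_reg_r in Z; lra. }
  assert (Lo : (P + 1) * (X + P * P * Q) >= (P + 1) * (l - 2 * b) * Nr - P * (P * P + P) * Q).
  { assert (Rr * Nr >= (P + 1) * (l - 2 * b) * Nr) by nra.
    assert ((P + 1) * c >= Nr - (P * P + P) * Q) by nra.
    assert (Rr * ((P + 1) * c) >= Rr * (Nr - (P * P + P) * Q)) by (apply Rmult_ge_compat_l; lra).
    assert (Rr * (P * P + P) * Q <= P * (P * P + P) * Q) by (apply Rmult_le_compat_r; [lra|]; apply Rmult_le_compat_r; nra).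
    assert (Rr * Rr * Q <= P * P * Q) by (apply Rmult_le_compat_r; nra).
    nra. }
  assert (Up : P * (X - (Rr * Rr + Rr) * Q) <= P * (l + 4 * b) * Nr + (P + 1) * P * P * Q).
  { assert (P * c <= Nr + P * P * Q) by lra.
    assert ((Rr + 1) * (P * c) <= (Rr + 1) * (Nr + P * P * Q)) by (apply Rmult_le_compat_l; lra).
    assert ((Rr + 1) * Nr <= P * (l + 4 * b) * Nr) by (apply Rmult_le_compat_r; lra).
    assert ((Rr + 1) * (P * P * Q) <= (P + 1) * (P * P * Q)) by (apply Rmult_le_compat_r; nra).
    nra. }
  assert (Lo' : X >= (l - 2 * b) * Nr - P * P * Q - (P * P + P) * Q).
  { assert (P * (P * P + P) * Q <= (P + 1) * ((P * P + P) * Q)) by (assert (0 <= (P * P + P) * Q) by nra; nra).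
    assert (Z : (P + 1) * (X + P * P * Q) >= (P + 1) * ((l - 2 * b) * Nr - (P * P + P) * Q)) by nra.
    apply Rge_le in Z. apply Rmult_le_reg_l in Z; lra. }
  assert (Up' : X <= (l + 4 * b) * Nr + (P + 1) * P * Q + (Rr * Rr + Rr) * Q).
  { assert (Z : P * (X - (Rr * Rr + Rr) * Q) <= P * ((l + 4 * b) * Nr + (P + 1) * P * Q)) by nra.
    apply Rmult_le_reg_l in Z; lra. }
  assert ((Rr * Rr + Rr) * Q <= (P * P + P) * Q) by (apply Rmult_le_compat_r; nra).
  apply Rabs_le. split.
  - assert (0 <= b * Nr) by nra. nra.
  - assert (0 <= b * Nr) by nra. nra. Qed.

Lemma cnt_beta alpha N a l q j :
  Rabs (cnt alpha N (a + INR j * mod1 (alpha * INR q)) l - cnt alpha N a l) <= INR j * INR q.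
Proof.
  replace (a + INR j * mod1 (alpha * INR q)) with ((a + INR (j * q) * alpha) + IZR (- (Z.of_nat j * Int_part (alpha * INR q)))).
  rewrite cnt_per. rewrite <- mult_INR. apply cnt_trans_k.
  rewrite opp_IZR, mult_IZR, <- INR_IZR_INZ, mult_INR. unfold mod1. ring. Qed.

Lemma tile_sum_bound alpha N a b q Rn :
  (forall j, Rabs (cnt alpha N (a + INR j * b) b - cnt alpha N a b) <= INR j * q) -> 0 <= q ->
  Rabs (S0 (fun j => cnt alpha N (a + INR j * b) b) Rn - INR Rn * cnt alpha N a b) <= INR Rn * INR Rn * q.
Proof. intros Hj Hq. induction Rn. simpl. rewrite Rmult_0_l, Rminus_0_r, Rabs_R0; lra.
  rewrite S0_S, S_INR. specialize (Hj Rn). apply Rabs_le_between' in Hj. apply Rabs_le_between' in IHRn.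
  pose proof (pos_INR Rn). assert (0 <= INR Rn * q) by nra. apply Rabs_le; nra. Qed.

Lemma weyl_int alpha : irrational alpha -> forall eps, 0 < eps -> exists C, forall N a l, 0 <= l <= 1 ->
  Rabs (cnt alpha N a l - INR N * l) <= eps * INR N + C.
Proof. intros Hirr eps Heps.
  destruct (dirichlet alpha (Rmin (eps / 4) (/2)) Hirr) as [q [Hq [Hb1 Hb2]]].
  { apply Rmin_pos; lra. }
  set (b := mod1 (alpha * INR q)) in *.
  assert (Hb3 : b <= eps / 4) by (pose proof (Rmin_l (eps / 4) (/2)); lra).
  assert (Hb4 : b <= / 2) by (pose proof (Rmin_r (eps / 4) (/2)); lra).
  destruct (nfloor_ex (/ b)) as [P [HP1 HP2]]. left; apply Rinv_0_lt_compat; lra.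
  assert (HPb1 : INR P * b <= 1).
  { apply (Rmult_le_reg_l (/ b)). apply Rinv_0_lt_compat; lra. field_simplify; lra. }
  assert (HPb2 : 1 < (INR P + 1) * b).
  { apply (Rmult_lt_reg_l (/ b)). apply Rinv_0_lt_compat; lra. field_simplify; lra. }
  assert (HP : 1 <= INR P) by nra.
  set (Q := INR q). assert (HQ : 0 <= Q) by apply pos_INR.
  exists (3 * (INR P * INR P + INR P) * Q). intros N a l Hl.
  set (c := cnt alpha N a b).
  assert (Hj : forall a' l' j, Rabs (cnt alpha N (a' + INR j * b) l' - cnt alpha N a' l') <= INR j * Q)
    by (intros; apply cnt_beta).
  destruct (nfloor_ex (l / b)) as [Rn [HR1 HR2]]. apply Rdiv_le_0_compat; lra.
  assert (HRb1 : INR Rn * b <= l).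
  { apply (Rmult_le_reg_l (/ b)). apply Rinv_0_lt_compat; lra. field_simplify; lra. }
  assert (HRb2 : l < (INR Rn + 1) * b).
  { apply (Rmult_lt_reg_l (/ b)). apply Rinv_0_lt_compat; lra. field_simplify; lra. }
  assert (HRP : INR Rn <= INR P).
  { assert (INR Rn < INR P + 1) by (apply (Rmult_lt_reg_r b); lra).
    rewrite <- S_INR in H. apply INR_lt in H. apply le_INR; lia. }
  pose proof (pos_INR Rn) as HR0.
  assert (EN : INR N = cnt alpha N a (INR P * b) + cnt alpha N (a + INR P * b) (1 - INR P * b)).
  { rewrite <- (cnt_full alpha N a). rewrite <- cnt_add by nra. f_equal; ring. }
  rewrite cnt_tile in EN by lra.
  pose proof (tile_sum_bound alpha N a b Q P (Hj a b) HQ) as T1. fold c in T1.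
  assert (R1 : 0 <= cnt alpha N (a + INR P * b) (1 - INR P * b) <= c + INR P * Q).
  { split. apply cnt_ge0. eapply Rle_trans. apply cnt_mono with (l' := b); lra.
    specialize (Hj a b P). apply Rabs_le_between' in Hj. fold c in Hj. lra. }
  apply Rabs_le_between' in T1.
  assert (El : cnt alpha N a l = cnt alpha N a (INR Rn * b) + cnt alpha N (a + INR Rn * b) (l - INR Rn * b)).
  { rewrite <- cnt_add by nra. f_equal; ring. }
  rewrite cnt_tile in El by lra.
  pose proof (tile_sum_bound alpha N a b Q Rn (Hj a b) HQ) as T2. fold c in T2.
  apply Rabs_le_between' in T2.
  assert (R2 : 0 <= cnt alpha N (a + INR Rn * b) (l - INR Rn * b) <= c + INR Rn * Q).
  { split. apply cnt_ge0. eapply Rle_trans. apply cnt_mono with (l' := b); lra.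
    specialize (Hj a b Rn). apply Rabs_le_between' in Hj. fold c in Hj. lra. }
  assert (Hc0 : 0 <= c) by apply cnt_ge0.
  assert (Fa := final_arith b (INR P) (INR Rn) l (INR N) c Q (cnt alpha N a l)).
  eapply Rle_trans; [apply Fa|]; try lra; try apply pos_INR.
  pose proof (pos_INR N). nra. Qed.

Lemma map_iota_S (f : nat -> R) k s : seq.map f (seq.iota (S s) k) = seq.map (fun i => f (S i)) (seq.iota s k).
Proof. revert s; induction k; intros s; simpl; auto. f_equal. apply IHk. Qed.

Lemma mkseq_S (f : nat -> R) k : seq.mkseq f (S k) = cons (f O) (seq.mkseq (fun i => f (S i)) k).
Proof. unfold seq.mkseq. simpl. f_equal. apply map_iota_S. Qed.

Lemma RS_mkseq (h : R -> R) T f m :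
  Riemann_sum h (SF_seq_f2 T (seq.mkseq f (S m))) = S0 (fun c => (f (S c) - f c) * h (T (f c) (f (S c)))) m.
Proof. revert f; induction m; intros f.
  - simpl. reflexivity.
  - rewrite mkseq_S. rewrite SF_cons_f2 by (rewrite seq.size_mkseq; lia).
    rewrite Riemann_sum_cons. rewrite IHm. rewrite S0_shift.
    rewrite mkseq_S. simpl. unfold plus, scal; simpl. unfold mult; simpl. reflexivity. Qed.

Lemma RS_unif (h : R -> R) I : is_RInt h 0 1 I -> forall eps, 0 < eps -> exists n, forall T : R -> R -> R,
  (forall a b, a <= b -> a <= T a b <= b) ->
  Rabs (S0 (fun c => / (INR n + 1) * h (T (INR c / (INR n + 1)) (INR (S c) / (INR n + 1)))) (S n) - I) < eps.
Proof. intros HI eps Heps.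
  unfold is_RInt in HI.
  assert (Hb := HI (ball I (mkposreal _ Heps)) (locally_ball I _)).
  destruct Hb as [d Hd].
  destruct (nfloor_ex (/ d)) as [n [Hn1 Hn2]]. left; apply Rinv_0_lt_compat; apply cond_pos.
  exists n. intros T HT.
  destruct (Riemann_fine_unif_part T 0 1 n HT ltac:(lra)) as [S1 [S2 [S3 S4]]].
  specialize (Hd (SF_seq_f2 T (unif_part 0 1 n))).
  assert (Hstep : seq_step (SF_lx (SF_seq_f2 T (unif_part 0 1 n))) < d).
  { eapply Rle_lt_trans; [apply S1|]. pose proof (cond_pos d). pose proof (pos_INR n).
    assert (d * / d = 1) by (field; lra).
    assert (1 < d * (INR n + 1)) by nra.
    replace ((1 - 0) / (INR n + 1)) with (/ (INR n + 1)) by (field; lra).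
    apply (Rmult_lt_reg_r (INR n + 1)); [lra|]. rewrite Rinv_l; lra. }
  specialize (Hd Hstep). rewrite Rmin_left, Rmax_right in Hd by lra. specialize (Hd (conj S2 (conj S3 S4))).
  unfold ball in Hd; simpl in Hd. unfold AbsRing_ball, abs, minus, plus, opp in Hd; simpl in Hd.
  unfold unif_part in Hd. rewrite RS_mkseq in Hd.
  rewrite sign_eq_1 in Hd by lra. unfold scal in Hd; simpl in Hd; unfold mult in Hd; simpl in Hd.
  rewrite Rmult_1_l in Hd.
  replace (S0 (fun c => / (INR n + 1) * h (T (INR c / (INR n + 1)) (INR (S c) / (INR n + 1)))) (S n))
    with (S0 (fun c => (0 + INR (S c) * (1 - 0) / (INR n + 1) - (0 + INR c * (1 - 0) / (INR n + 1))) *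
       h (T (0 + INR c * (1 - 0) / (INR n + 1)) (0 + INR (S c) * (1 - 0) / (INR n + 1)))) (S n)).
  exact Hd.
  apply S0_ext. intros c _. pose proof (pos_INR n).
  replace (0 + INR (S c) * (1 - 0) / (INR n + 1) - (0 + INR c * (1 - 0) / (INR n + 1))) with (/ (INR n + 1))
    by (rewrite S_INR; field; lra).
  f_equal. f_equal. f_equal; field; lra. Qed.

Lemma argmax_ex (h : R -> R) (x : nat -> R) N a b : a <= b ->
  exists t, a <= t <= b /\ forall i, (i < N)%nat -> a <= x i < b -> h (x i) <= h t.
Proof. intros Hab. induction N.
  - exists a. split; [lra|]. intros; lia.
  - destruct IHN as [t [Ht1 Ht2]].
    destruct (Rle_dec a (x N)) as [H1|H1]; [destruct (Rlt_dec (x N) b) as [H2|H2]|].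
    + destruct (Rle_dec (h (x N)) (h t)) as [H3|H3].
      * exists t. split; auto. intros i Hi Hx. destruct (Nat.eq_dec i N); [subst; auto|]. apply Ht2; auto; lia.
      * exists (x N). split; [lra|]. intros i Hi Hx. destruct (Nat.eq_dec i N); [subst; lra|].
        specialize (Ht2 i ltac:(lia) Hx). lra.
    + exists t. split; auto. intros i Hi Hx. destruct (Nat.eq_dec i N); [subst; lra|]. apply Ht2; auto; lia.
    + exists t. split; auto. intros i Hi Hx. destruct (Nat.eq_dec i N); [subst; lra|]. apply Ht2; auto; lia. Qed.

Lemma tag_ex (h : R -> R) (x : nat -> R) N : exists T : R -> R -> R, forall a b, a <= b ->
  (a <= T a b <= b /\ forall i, (i < N)%nat -> a <= x i < b -> h (x i) <= h (T a b)).
Proof.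
  exists (fun a b => match Rle_dec a b with
     | left H => proj1_sig (constructive_indefinite_description _ (argmax_ex h x N a b H))
     | right _ => a end).
  intros a b H. destruct (Rle_dec a b) as [H'|H']; [|contradiction].
  destruct (constructive_indefinite_description _ (argmax_ex h x N a b H')) as [t Ht]. simpl. exact Ht. Qed.

Lemma indc_tile a b Rn x : INR Rn * b <= 1 -> 0 <= b ->
  indc a (INR Rn * b) x = S0 (fun j => indc (a + INR j * b) b x) Rn.
Proof. intros H Hb. induction Rn.
  - simpl. rewrite Rmult_0_l. unfold indc. destruct Rlt_dec; auto. pose proof (mod1_range (x - a)); lra.
  - rewrite S0_S. rewrite <- IHRn. rewrite S_INR, Rmult_plus_distr_r, Rmult_1_l.
    apply indc_add. apply Rmult_le_pos; [apply pos_INR|lra]. lra. rewrite S_INR in H; lra.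
    rewrite S_INR in H. pose proof (pos_INR Rn). nra. Qed.

Lemma indc_cell c Kr x : 0 <= x < 1 -> 1 <= Kr -> INR (S c) <= Kr -> indc (INR c / Kr) (/ Kr) x = 1 ->
  INR c / Kr <= x < INR (S c) / Kr.
Proof. intros Hx HK Hc H. unfold indc in H. destruct Rlt_dec as [r|r]; [|lra]. clear H.
  rewrite S_INR in *. pose proof (pos_INR c).
  assert (Hv : Kr * / Kr = 1) by (field; lra). assert (Hv0 : 0 < / Kr) by (apply Rinv_0_lt_compat; lra).
  assert (E1 : INR c / Kr + / Kr <= 1) by (unfold Rdiv; nra).
  assert (0 <= INR c / Kr) by (apply Rdiv_le_0_compat; lra).
  destruct (Rle_lt_dec 0 (x - INR c / Kr)).
  - rewrite mod1_small in r by lra. replace ((INR c + 1) / Kr) with (INR c / Kr + / Kr) by (field; lra). lra.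
  - rewrite mod1_neg in r by lra. lra. Qed.

Lemma weyl_upper alpha (h : R -> R) I B : irrational alpha -> is_RInt h 0 1 I ->
  (forall x, 0 <= x <= 1 -> Rabs (h x) <= B) -> forall eps, 0 < eps -> exists C, forall N,
  S0 (fun i => h (xs alpha i)) N <= INR N * I + eps * INR N + C.
Proof. intros Hirr HI HB eps Heps.
  assert (B0 : 0 <= B) by (specialize (HB 0 ltac:(lra)); pose proof (Rabs_pos (h 0)); lra).
  destruct (RS_unif h I HI (eps / 2) ltac:(lra)) as [n Hn].
  set (Kr := INR n + 1). assert (HKr : 1 <= Kr) by (unfold Kr; pose proof (pos_INR n); lra).
  set (d := eps / (2 * (Kr * B + 1))).
  assert (Hd : 0 < d) by (unfold d; apply Rdiv_lt_0_compat; [lra|]; nra).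
  destruct (weyl_int alpha Hirr d Hd) as [C0 HC0].
  assert (C00 : 0 <= C0) by (specialize (HC0 O 0 1 ltac:(lra)); simpl in HC0; rewrite Rmult_0_l, Rmult_0_r, Rminus_0_r, Rabs_right in HC0 by (unfold cnt; simpl; lra); unfold cnt in HC0; simpl in HC0; lra).
  exists (Kr * B * C0). intros N.
  destruct (tag_ex h (xs alpha) N) as [T HT].
  set (cl := fun c => T (INR c / Kr) (INR (S c) / Kr)).
  assert (Hcl : forall c, (c < S n)%nat -> INR c / Kr <= INR (S c) / Kr).
  { intros c _. apply Rmult_le_compat_r. left; apply Rinv_0_lt_compat; lra. apply le_INR; lia. }
  assert (Hx : forall i, 0 <= xs alpha i < 1) by (intros; apply mod1_range).
  assert (Part : forall x, 0 <= x < 1 -> S0 (fun c => indc (INR c / Kr) (/ Kr) x) (S n) = 1).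
  { intros x Hx0. replace 1 with (indc 0 (INR (S n) * / Kr) x).
    rewrite indc_tile. apply S0_ext. intros c _. f_equal. unfold Rdiv; ring.
    unfold Kr; rewrite S_INR; right; field; pose proof (pos_INR n); lra.
    left; apply Rinv_0_lt_compat; lra.
    unfold indc. replace (INR (S n) * / Kr) with 1 by (unfold Kr; rewrite S_INR; field; pose proof (pos_INR n); lra).
    destruct Rlt_dec; auto. exfalso; apply n0. apply mod1_range. }
  assert (Step1 : S0 (fun i => h (xs alpha i)) N =
     S0 (fun c => S0 (fun i => indc (INR c / Kr) (/ Kr) (xs alpha i) * h (xs alpha i)) N) (S n)).
  { rewrite <- S0_swap. apply S0_ext. intros i _.
    rewrite (S0_ext _ (fun c => h (xs alpha i) * indc (INR c / Kr) (/ Kr) (xs alpha i))) by (intros; ring).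
    rewrite S0_scal, Part by apply mod1_range. ring. }
  assert (Step2 : forall c, (c < S n)%nat -> S0 (fun i => indc (INR c / Kr) (/ Kr) (xs alpha i) * h (xs alpha i)) N <=
     cnt alpha N (INR c / Kr) (/ Kr) * h (cl c)).
  { intros c Hc. unfold cnt. rewrite Rmult_comm, <- S0_scal. apply S0_le. intros i Hi.
    pose proof (indc_01 (INR c / Kr) (/ Kr) (xs alpha i)).
    destruct (Req_dec (indc (INR c / Kr) (/ Kr) (xs alpha i)) 1) as [E|E].
    - rewrite E. destruct (HT _ _ (Hcl c Hc)) as [_ HT2]. unfold cl.
      assert (h (xs alpha i) <= h (T (INR c / Kr) (INR (S c) / Kr))).
      { apply HT2; auto. apply indc_cell; auto. unfold Kr; rewrite S_INR.
        apply Rplus_le_compat_r, le_INR; lia. }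
      lra.
    - assert (indc (INR c / Kr) (/ Kr) (xs alpha i) = 0) by (unfold indc in *; destruct Rlt_dec; lra).
      rewrite H0. lra. }
  assert (Step3 : forall c, (c < S n)%nat -> cnt alpha N (INR c / Kr) (/ Kr) * h (cl c) <=
      INR N * (/ Kr * h (cl c)) + (d * INR N + C0) * B).
  { intros c Hc. specialize (HC0 N (INR c / Kr) (/ Kr)).
    assert (HK' : 0 <= / Kr <= 1) by (split; [left; apply Rinv_0_lt_compat; lra|rewrite <- Rinv_1; apply Rinv_le_contravar; lra]).
    specialize (HC0 HK').
    destruct (HT _ _ (Hcl c Hc)) as [HT1 _]. fold (cl c) in HT1.
    assert (0 <= INR c / Kr) by (apply Rdiv_le_0_compat; [apply pos_INR|lra]).
    assert (INR (S c) / Kr <= 1) by (apply (Rmult_le_reg_l Kr); [lra|]; field_simplify; [|lra]; unfold Kr; rewrite S_INR; apply Rplus_le_compat_r, le_INR; lia).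
    specialize (HB (cl c) ltac:(lra)).
    set (u := cnt alpha N (INR c / Kr) (/ Kr) - INR N * / Kr).
    replace (cnt alpha N (INR c / Kr) (/ Kr) * h (cl c)) with (INR N * (/ Kr * h (cl c)) + u * h (cl c)) by (unfold u; ring).
    apply Rplus_le_compat_l. eapply Rle_trans; [apply Rle_abs|]. rewrite Rabs_mult.
    apply Rmult_le_compat; try apply Rabs_pos; auto. }
  rewrite Step1. eapply Rle_trans. apply S0_le. intros c Hc. eapply Rle_trans; [apply Step2; auto|apply Step3; auto].
  rewrite S0_plus, S0_scal, S0_const.
  specialize (Hn T (fun a b H => proj1 (HT a b H))). fold Kr in Hn.
  apply Rabs_lt_between' in Hn. destruct Hn as [_ Hn].
  rewrite (S_INR n). fold Kr.
  assert (E : Kr * ((d * INR N + C0) * B) = (Kr * B * d) * INR N + Kr * B * C0) by ring.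
  rewrite E.
  assert (Kr * B * d <= eps / 2).
  { unfold d. assert (W0 : 0 <= Kr * B) by nra. set (w := Kr * B) in *.
    assert (Hw : w * / (w + 1) <= 1).
    { assert ((w + 1) * / (w + 1) = 1) by (field; lra). assert (0 < / (w + 1)) by (apply Rinv_0_lt_compat; lra). nra. }
    replace (w * (eps / (2 * (w + 1)))) with (eps / 2 * (w * / (w + 1))) by (field; lra). nra. }
  pose proof (pos_INR N). unfold cl. cbv beta.
  assert (INR N * S0 (fun c : nat => / Kr * h (T (INR c / Kr) (INR (S c) / Kr))) (S n) <= INR N * (I + eps / 2))
    by (apply Rmult_le_compat_l; lra).
  assert (Kr * B * d * INR N <= eps / 2 * INR N) by (apply Rmult_le_compat_r; lra).
  lra. Qed.

Lemma weyl_fun alpha (h : R -> R) I B : irrational alpha -> is_RInt h 0 1 I ->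
  (forall x, 0 <= x <= 1 -> Rabs (h x) <= B) -> forall eps, 0 < eps -> exists C, forall N,
  Rabs (S0 (fun i => h (xs alpha i)) N - INR N * I) <= eps * INR N + C.
Proof. intros Hirr HI HB eps Heps.
  destruct (weyl_upper alpha h I B Hirr HI HB eps Heps) as [C1 H1].
  assert (HI' : is_RInt (fun x => - h x) 0 1 (- I)) by (apply (is_RInt_opp h 0 1 I HI)).
  assert (HB' : forall x, 0 <= x <= 1 -> Rabs (- h x) <= B) by (intros; rewrite Rabs_Ropp; auto).
  destruct (weyl_upper alpha (fun x => - h x) (- I) B Hirr HI' HB' eps Heps) as [C2 H2].
  exists (Rabs C1 + Rabs C2). intros N. specialize (H1 N). specialize (H2 N).
  rewrite S0_opp in H2. pose proof (Rle_abs C1). pose proof (Rle_abs C2).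
  pose proof (Rabs_pos C1). pose proof (Rabs_pos C2). assert (INR N * - I = - (INR N * I)) by ring.
  apply Rabs_le. lra. Qed.

Definition tg c s := 2 * c * s - c * c.
Definition cp M n i := - M + 2 * M * INR i / INR (S n).
Fixpoint phi M n j s := match j with O => tg (cp M n 0) s | S j' => Rmax (phi M n j' s) (tg (cp M n (S j')) s) end.

Lemma phi_le M n j s : phi M n j s <= s * s.
Proof. assert (forall c, tg c s <= s * s) by (intros c; unfold tg; pose proof (pow2_ge_0 (s - c)); nra).
  induction j; simpl; [apply H|]. apply Rmax_lub; auto. Qed.

Lemma phi_ge M n j s i : (i <= j)%nat -> tg (cp M n i) s <= phi M n j s.
Proof. induction j; intros Hi. replace i with O by lia. simpl; lra.
  simpl. destruct (Nat.eq_dec i (S j)). subst; apply Rmax_r.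
  eapply Rle_trans; [apply IHj; lia|apply Rmax_l]. Qed.

Lemma phi_close M n s : 0 < M -> -M <= s <= M -> s * s - phi M n (S n) s <= (2 * M / INR (S n)) ^ 2.
Proof. intros HM Hs. pose proof (pos_INR n) as Hn. rewrite S_INR in *.
  assert (H0 : 0 <= (s + M) * (INR n + 1) / (2 * M)) by (apply Rdiv_le_0_compat; nra).
  destruct (nfloor_ex _ H0) as [i [Hi1 Hi2]].
  assert (Hi3 : INR i <= INR n + 1).
  { eapply Rle_trans; [apply Hi1|]. apply (Rmult_le_reg_r (2 * M)); [lra|]. field_simplify; nra. }
  assert (Hi : (i <= S n)%nat) by (apply INR_le; rewrite S_INR; lra).
  pose proof (phi_ge M n (S n) s i Hi) as P.
  unfold tg, cp in P. rewrite S_INR in P.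
  set (c := - M + 2 * M * INR i / (INR n + 1)) in *.
  assert (Hc1 : c <= s).
  { unfold c. assert (2 * M * INR i / (INR n + 1) <= s + M); [|lra].
    apply (Rmult_le_reg_r ((INR n + 1) / (2 * M))). apply Rdiv_lt_0_compat; lra.
    replace (2 * M * INR i / (INR n + 1) * ((INR n + 1) / (2 * M))) with (INR i) by (field; lra).
    unfold Rdiv in *. lra. }
  assert (Hc2 : s < c + 2 * M / (INR n + 1)).
  { unfold c. assert (s + M < 2 * M * (INR i + 1) / (INR n + 1)); [|unfold Rdiv in *; lra].
    apply (Rmult_lt_reg_r ((INR n + 1) / (2 * M))). apply Rdiv_lt_0_compat; lra.
    replace (2 * M * (INR i + 1) / (INR n + 1) * ((INR n + 1) / (2 * M))) with (INR i + 1) by (field; lra).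
    unfold Rdiv in *. lra. }
  assert (s * s - (2 * c * s - c * c) = (s - c) ^ 2) by ring.
  assert ((s - c) ^ 2 <= (2 * M / (INR n + 1)) ^ 2) by (apply pow_incrst_1 || (simpl; nra)).
  lra. Qed.

Lemma Rmax_abs p q : Rmax p q = / 2 * ((p + q) + Rabs (p - q)).
Proof. unfold Rmax. destruct Rle_dec; [rewrite Rabs_left1 by lra|rewrite Rabs_right by lra]; field. Qed.

Lemma ex_RInt_phi M n (w : R -> R) : ex_RInt w 0 1 -> forall j, ex_RInt (fun x => phi M n j (w x)) 0 1.
Proof. intros Hw.
  assert (Htg : forall c, ex_RInt (fun x => tg c (w x)) 0 1).
  { intros c. apply (@ex_RInt_ext R_NormedModule (fun x => minus (scal (2 * c) (w x)) (c * c)) (fun x => tg c (w x))).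
    intros; unfold tg; reflexivity.
    apply (@ex_RInt_minus R_NormedModule).
    apply (@ex_RInt_scal R_NormedModule w); auto. apply ex_RInt_const. }
  induction j. exact (Htg _).
  apply (@ex_RInt_ext R_NormedModule (fun x => scal (/2) (plus (plus (phi M n j (w x)) (tg (cp M n (S j)) (w x)))
      (norm (minus (phi M n j (w x)) (tg (cp M n (S j)) (w x)))))) (fun x => phi M n (S j) (w x))).
  intros x _. change (phi M n (S j) (w x)) with (Rmax (phi M n j (w x)) (tg (cp M n (S j)) (w x))).
  rewrite Rmax_abs. reflexivity.
  apply (@ex_RInt_scal R_NormedModule).
  apply (@ex_RInt_plus R_NormedModule). apply (@ex_RInt_plus R_NormedModule); auto.
  apply (ex_RInt_norm (fun x => minus (phi M n j (w x)) (tg (cp M n (S j)) (w x)))).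
  apply (@ex_RInt_minus R_NormedModule); auto. Qed.

Definition clamp x := Rmax 0 (Rmin x 1).

Lemma clamp_in x : 0 <= clamp x <= 1.
Proof. unfold clamp, Rmax, Rmin. repeat destruct Rle_dec; lra. Qed.
Lemma clamp_id x : 0 <= x <= 1 -> clamp x = x.
Proof. intros. unfold clamp, Rmax, Rmin. repeat destruct Rle_dec; lra. Qed.

Lemma ex_RInt_sq (w : R -> R) : ex_RInt w 0 1 -> ex_RInt (fun x => w x * w x) 0 1.
Proof. intros Hw. destruct (ex_RInt_ub w 0 1 Hw) as [M0 HM0].
  rewrite Rmin_left, Rmax_right in HM0 by lra.
  set (M := Rabs M0 + 1). assert (HM : 0 < M) by (unfold M; pose proof (Rabs_pos M0); lra).
  set (wt := fun x => w (clamp x)).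
  assert (Hwt : ex_RInt wt 0 1).
  { apply (@ex_RInt_ext R_NormedModule w wt). intros x Hx. rewrite Rmin_left, Rmax_right in Hx by lra. unfold wt. rewrite clamp_id; lra. auto. }
  assert (HwtM : forall x, - M <= wt x <= M).
  { intros x. unfold wt. specialize (HM0 (clamp x) (clamp_in x)).
    change (Rabs (w (clamp x)) <= M0) in HM0.
    pose proof (proj1 (Rabs_le_between' (w (clamp x)) 0 M0)) as Q. rewrite Rminus_0_r in Q. apply Q in HM0. pose proof (Rle_abs M0). pose proof (Rabs_pos M0).
    unfold M. split; lra. }
  set (fn := fun n x => phi M n (S n) (wt x)).
  assert (Hfn : forall n, is_RInt (fn n) 0 1 (RInt (fn n) 0 1)).
  { intros n. apply (@RInt_correct R_CompleteNormedModule). apply ex_RInt_phi; auto. }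
  destruct (@filterlim_RInt nat R_CompleteNormedModule fn 0 1 eventually eventually_filter (fun x => wt x * wt x) (fun n => RInt (fn n) 0 1) Hfn)
    as [If [_ HIf]].
  - apply filterlim_locally. intros eps.
    destruct (nfloor_ex (4 * M * M / eps)) as [N0 [HN1 HN2]].
    { apply Rdiv_le_0_compat. nra. apply cond_pos. }
    exists N0. intros n Hn. intros t.
    change (Rabs (fn n t + - (wt t * wt t)) < eps). unfold fn.
    pose proof (phi_close M n (wt t) HM (HwtM t)) as P. pose proof (phi_le M n (S n) (wt t)) as P2.
    rewrite Rabs_left1 by lra.
    assert (Hb : (2 * M / INR (S n)) ^ 2 < eps).
    { rewrite S_INR. pose proof (pos_INR n). pose proof (cond_pos eps).
      assert (INR N0 <= INR n) by (apply le_INR; auto).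
      assert (4 * M * M < eps * (INR n + 1)).
      { apply (Rmult_lt_reg_r (/ eps)). apply Rinv_0_lt_compat; lra.
        replace (eps * (INR n + 1) * / eps) with (INR n + 1) by (field; lra). unfold Rdiv in HN2. lra. }
      replace ((2 * M / (INR n + 1)) ^ 2) with (4 * M * M / ((INR n + 1) * (INR n + 1))) by (field; lra).
      apply (Rmult_lt_reg_r ((INR n + 1) * (INR n + 1))). nra.
      replace (4 * M * M / ((INR n + 1) * (INR n + 1)) * ((INR n + 1) * (INR n + 1))) with (4 * M * M) by (field; lra).
      nra. }
    lra.
  - apply (@ex_RInt_ext R_NormedModule (fun x => wt x * wt x)).
    intros x Hx. rewrite Rmin_left, Rmax_right in Hx by lra. unfold wt. rewrite clamp_id; lra.
    exists If; auto. Qed.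

Lemma ex_RInt_mult (u v : R -> R) : ex_RInt u 0 1 -> ex_RInt v 0 1 -> ex_RInt (fun x => u x * v x) 0 1.
Proof. intros Hu Hv.
  assert (H1 := ex_RInt_sq (fun x => u x + v x) (@ex_RInt_plus R_NormedModule _ _ _ _ Hu Hv)).
  assert (H2 := ex_RInt_sq (fun x => u x - v x) (@ex_RInt_minus R_NormedModule _ _ _ _ Hu Hv)).
  apply (@ex_RInt_ext R_NormedModule (fun x => scal (/4) (minus ((u x + v x) * (u x + v x)) ((u x - v x) * (u x - v x))))).
  intros x _. change (/ 4 * ((u x + v x) * (u x + v x) + - ((u x - v x) * (u x - v x))) = u x * v x). field.
  apply (@ex_RInt_scal R_NormedModule). apply (@ex_RInt_minus R_NormedModule); auto. Qed.

Lemma inF_bound f finf : inF f finf -> exists B, forall n x, 0 <= x <= 1 -> Rabs (f n x) <= B.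
Proof. intros [H1 [H2 H3]]. destruct (H2 1 ltac:(lra)) as [N HN].
  assert (HB0 : exists B0, forall n x, (n <= N)%nat -> 0 <= x <= 1 -> Rabs (f n x) <= B0).
  { clear HN. induction N.
    - destruct (H1 O) as [M HM]. exists M. intros n x Hn Hx. replace n with O by lia. auto.
    - destruct IHN as [B1 HB1]. destruct (H1 (S N)) as [M HM]. exists (Rmax B1 M).
      intros n x Hn Hx. destruct (Nat.eq_dec n (S N)).
      + subst. eapply Rle_trans; [apply HM; auto|apply Rmax_r].
      + eapply Rle_trans; [apply HB1; auto; lia|apply Rmax_l]. }
  destruct HB0 as [B0 HB0]. exists (B0 + 2). intros n x Hx.
  destruct (le_lt_dec n N) as [L|L].
  - specialize (HB0 n x L Hx). lra.
  - specialize (HB0 N x (le_n N) Hx). pose proof (HN n x ltac:(lia) Hx). pose proof (HN N x (le_n N) Hx).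
    replace (f n x) with (f N x + (f n x - finf x) - (f N x - finf x)) by ring.
    eapply Rle_trans; [apply Rabs_triang|]. rewrite Rabs_Ropp.
    eapply Rle_trans; [apply Rplus_le_compat_r; apply Rabs_triang|]. lra. Qed.

Lemma theta_bound alpha f B : (forall n x, 0 <= x <= 1 -> Rabs (f n x) <= B) ->
  forall n k, Rabs (theta alpha f n k) <= B.
Proof. intros HB n k. unfold theta. apply HB. pose proof (mod1_range (alpha * INR k)); lra. Qed.

Lemma e00_sum x K : S0 (fun k => e00 (x - INR k)) K <= Rmax 0 (Rmin (/2) (INR K - x)).
Proof. induction K.
  - simpl. apply Rmax_l.
  - rewrite S0_S. rewrite S_INR. revert IHK. unfold e00, Rmax, Rmin.
    repeat destruct Rle_dec; intros; lra. Qed.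

Lemma e00_sum_half x K : S0 (fun k => e00 (x - INR k)) K <= / 2.
Proof. eapply Rle_trans; [apply e00_sum|]. unfold Rmax, Rmin. repeat destruct Rle_dec; lra. Qed.

Lemma sqrt_pow2_eq n : sqrt (2 ^ n) = sqrt 2 ^ n.
Proof. induction n. simpl. apply sqrt_1. rewrite sqrt_pow2_S, IHn. reflexivity. Qed.

Lemma inner_bound alpha f B t : (forall n k, Rabs (theta alpha f n k) <= B) ->
  forall n, Rabs (inner alpha f n t) <= B * (/ sqrt 2) ^ n.
Proof. intros HB n. rewrite inner_S0. eapply Rle_trans; [apply S0_abs|].
  assert (B0 : 0 <= B) by (specialize (HB O O); pose proof (Rabs_pos (theta alpha f 0 0)); lra).
  pose proof (sqrt_pow2_pos n) as Sp.
  eapply Rle_trans. apply (S0_le _ (fun k => B * / sqrt (2 ^ n) * e00 (2 ^ n * t - INR k))).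
  { intros k _. unfold ef. rewrite Rabs_mult, Rabs_mult. rewrite (Rabs_right (/ sqrt (2 ^ n))) by (left; apply Rinv_0_lt_compat; auto).
    rewrite (Rabs_right (e00 _)) by (apply Rle_ge, e00_ge0). pose proof (e00_ge0 (2 ^ n * t - INR k)).
    assert (0 < / sqrt (2 ^ n)) by (apply Rinv_0_lt_compat; auto).
    specialize (HB n k). rewrite <- Rmult_assoc. apply Rmult_le_compat_r; auto. apply Rmult_le_compat_r; lra. }
  rewrite S0_scal. pose proof (e00_sum_half (2 ^ n * t) (2 ^ n)).
  rewrite sqrt_pow2_eq, <- Rinv_pow by (destruct sqrt2_facts; lra).
  assert (0 < / sqrt 2 ^ n) by (apply Rinv_0_lt_compat, pow_lt; destruct sqrt2_facts; lra).
  assert (0 <= S0 (fun k => e00 (2 ^ n * t - INR k)) (2 ^ n)) by (apply S0_nonneg; intros; apply e00_ge0).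
  assert (B * / sqrt 2 ^ n * S0 (fun k => e00 (2 ^ n * t - INR k)) (2 ^ n) <= B * / sqrt 2 ^ n * / 2)
    by (apply Rmult_le_compat_l; nra).
  nra. Qed.

Lemma inner_ex_series alpha f B t : (forall n k, Rabs (theta alpha f n k) <= B) ->
  ex_series (fun n => inner alpha f n t).
Proof. intros HB. apply (@ex_series_le R_AbsRing R_CompleteNormedModule _ (fun n => B * (/ sqrt 2) ^ n)).
  - intros n. change (Rabs (inner alpha f n t) <= B * (/ sqrt 2) ^ n). apply inner_bound; auto.
  - apply (@ex_series_scal_l R_AbsRing R_NormedModule B (fun n => (/ sqrt 2) ^ n)).
    apply ex_series_geom. destruct sqrt2_facts as [S1 S2].
    rewrite Rabs_right by (left; apply Rinv_0_lt_compat; lra).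
    assert (1 < sqrt 2) by nra. rewrite <- Rinv_1. apply Rinv_lt_contravar; lra. Qed.

Lemma inF_uniform_prod f g finf ginf Bf Bg : inF f finf -> inF g ginf ->
  (forall n x, 0 <= x <= 1 -> Rabs (f n x) <= Bf) -> (forall n x, 0 <= x <= 1 -> Rabs (g n x) <= Bg) ->
  forall eps, 0 < eps -> exists M0, forall m x, (M0 <= m)%nat -> 0 <= x <= 1 ->
  Rabs (f m x * g m x - finf x * ginf x) <= eps.
Proof. intros [_ [Hf _]] [_ [Hg _]] HBf HBg eps Heps.
  assert (Bf0 : 0 <= Bf) by (specialize (HBf O 0 ltac:(lra)); pose proof (Rabs_pos (f O 0)); lra).
  assert (Bg0 : 0 <= Bg) by (specialize (HBg O 0 ltac:(lra)); pose proof (Rabs_pos (g O 0)); lra).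
  set (d := Rmin 1 (eps / (Bf + Bg + 1))).
  assert (Hd : 0 < d) by (unfold d; apply Rmin_pos; [lra|apply Rdiv_lt_0_compat; lra]).
  destruct (Hf d Hd) as [N1 HN1]. destruct (Hg d Hd) as [N2 HN2].
  exists (Nat.max N1 N2). intros m x Hm Hx.
  specialize (HN1 m x ltac:(lia) Hx). specialize (HN2 m x ltac:(lia) Hx).
  specialize (HBf m x Hx). specialize (HBg m x Hx).
  replace (f m x * g m x - finf x * ginf x) with ((f m x - finf x) * g m x + finf x * (g m x - ginf x)) by ring.
  eapply Rle_trans; [apply Rabs_triang|]. rewrite !Rabs_mult.
  assert (Hfi : Rabs (finf x) <= Bf + 1).
  { replace (finf x) with (f m x - (f m x - finf x)) by ring. eapply Rle_trans; [apply Rabs_triang|].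
    rewrite Rabs_Ropp. assert (d <= 1) by apply Rmin_l. lra. }
  assert (d * (Bf + Bg + 1) <= eps).
  { assert (d <= eps / (Bf + Bg + 1)) by apply Rmin_r.
    apply (Rmult_le_compat_r (Bf + Bg + 1)) in H; [|lra]. unfold Rdiv in H. rewrite Rmult_assoc, Rinv_l in H; lra. }
  assert (Rabs (f m x - finf x) * Rabs (g m x) <= d * Bg) by (apply Rmult_le_compat; try apply Rabs_pos; lra).
  assert (Rabs (finf x) * Rabs (g m x - ginf x) <= (Bf + 1) * d) by (apply Rmult_le_compat; try apply Rabs_pos; lra).
  nra. Qed.

Lemma part_b alpha (Hirr : irrational alpha) f g finf ginf : inF f finf -> inF g ginf ->
  forall t, 0 <= t <= 1 ->
  is_lim_seq (fun n => covn n (y alpha f) (y alpha g) t) (t * RInt (fun s => finf s * ginf s) 0 1).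
Proof. intros HF HG t Ht.
  destruct (inF_bound f finf HF) as [Bf HBf]. destruct (inF_bound g ginf HG) as [Bg HBg].
  set (h := fun s => finf s * ginf s).
  assert (Hh : ex_RInt h 0 1) by (apply ex_RInt_mult; [apply HF|apply HG]).
  set (L := RInt h 0 1).
  assert (HL : is_RInt h 0 1 L) by (apply (@RInt_correct R_CompleteNormedModule); auto).
  destruct (ex_RInt_ub h 0 1 Hh) as [Bh HBh]. rewrite Rmin_left, Rmax_right in HBh by lra.
  assert (HBh' : forall x, 0 <= x <= 1 -> Rabs (h x) <= Bh) by (intros x Hx; exact (HBh x Hx)).
  set (Im := fun m => proj1_sig (constructive_indefinite_description _ (isI_ex m t Ht))).
  assert (HI : forall m, isI m t (Im m)) by (intros m; unfold Im; destruct constructive_indefinite_description; auto).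
  apply (covn_limit alpha f g Bf Bg t L (theta_bound alpha f Bf HBf) (theta_bound alpha g Bg HBg) Ht Im HI).
  apply is_lim_seq_spec. intros eps.
  set (e := eps / 4). assert (He : 0 < e) by (unfold e; destruct eps; simpl; lra).
  destruct (weyl_fun alpha h L Bh Hirr HL HBh' e He) as [C HC].
  destruct (inF_uniform_prod f g finf ginf Bf Bg HF HG HBf HBg e He) as [M0 HM0].
  pose proof half_pow_lim as G. apply is_lim_seq_spec in G.
  assert (Hk : 0 < e / (Rabs C + Rabs L + 1)) by (apply Rdiv_lt_0_compat; [lra|]; pose proof (Rabs_pos C); pose proof (Rabs_pos L); lra).
  destruct (G (mkposreal _ Hk)) as [K HK]. simpl in HK.
  exists (Nat.max M0 K). intros m Hm.
  specialize (HK m ltac:(lia)). rewrite Rminus_0_r, Rabs_right in HK by (left; apply pow_lt; lra).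
  destruct (HI m) as [HI1 [HI2 HI3]]. set (I := Im m) in *.
  set (p := 2 ^ m) in *. assert (Hp : 0 < p) by apply pow2_gt0.
  assert (HIp : INR I <= p).
  { assert (Z : INR I <= INR (2 ^ m)) by (apply le_INR; lia). rewrite pow2INR in Z. exact Z. }
  assert (HIt : Rabs (INR I - p * t) <= 1).
  { rewrite minus_INR in HI2 by lia. simpl INR in HI2. apply Rabs_le. split; [|lra].
    destruct (Nat.lt_ge_cases I (2 ^ m)) as [L1|L1]. specialize (HI3 L1). fold p in HI3. lra.
    assert (Z : (I = 2 ^ m)%nat) by lia. assert (Z2 : INR I = INR (2 ^ m)) by (rewrite Z; auto). rewrite pow2INR in Z2. fold p in Z2. nra. }
  assert (HA1 : Rabs (Am alpha f g m I - S0 (fun i => h (xs alpha i)) I) <= e * INR I).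
  { unfold Am. unfold Rminus. rewrite <- S0_opp, <- S0_plus. eapply Rle_trans; [apply S0_abs|].
    replace (e * INR I) with (S0 (fun _ => e) I) by (rewrite S0_const; ring). apply S0_le. intros i _. unfold theta, h. fold (xs alpha i).
    apply HM0. lia. pose proof (mod1_range (alpha * INR i)). unfold xs; lra. }
  specialize (HC I).
  assert (Main : Rabs (Am alpha f g m I - t * L * p) <= 2 * e * p + (Rabs C + Rabs L)).
  { replace (Am alpha f g m I - t * L * p) with
      ((Am alpha f g m I - S0 (fun i => h (xs alpha i)) I) + (S0 (fun i => h (xs alpha i)) I - INR I * L)
       + L * (INR I - p * t)) by ring.
    eapply Rle_trans; [apply Rabs_triang|]. eapply Rle_trans; [apply Rplus_le_compat_r, Rabs_triang|].
    rewrite Rabs_mult.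
    assert (Rabs L * Rabs (INR I - p * t) <= Rabs L * 1) by (apply Rmult_le_compat_l; [apply Rabs_pos|auto]).
    pose proof (Rle_abs C). pose proof (pos_INR I).
    assert (e * INR I <= e * p) by (apply Rmult_le_compat_l; lra). lra. }
  replace (Am alpha f g m I / p - t * L) with ((Am alpha f g m I - t * L * p) / p) by (field; lra).
  rewrite Rabs_div by lra. rewrite (Rabs_right p) by lra.
  apply (Rmult_lt_reg_r p); [lra|]. unfold Rdiv. rewrite Rmult_assoc, Rinv_l, Rmult_1_r by lra.
  assert (Hpi : (/ 2) ^ m = / p) by (unfold p; rewrite Rinv_pow; auto; lra).
  rewrite Hpi in HK.
  assert (Rabs C + Rabs L < e * p).
  { assert (0 < Rabs C + Rabs L + 1) by (pose proof (Rabs_pos C); pose proof (Rabs_pos L); lra).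
    apply (Rmult_lt_compat_r (p * (Rabs C + Rabs L + 1))) in HK; [|nra].
    replace (/ p * (p * (Rabs C + Rabs L + 1))) with (Rabs C + Rabs L + 1) in HK by (field; lra).
    replace (e / (Rabs C + Rabs L + 1) * (p * (Rabs C + Rabs L + 1))) with (e * p) in HK by (field; lra). lra. }
  unfold e in *. destruct eps; simpl in *. nra. Qed.

Lemma inF_comb f g finf ginf a b : inF f finf -> inF g ginf ->
  inF (fun n x => a * f n x + b * g n x) (fun x => a * finf x + b * ginf x).
Proof. intros [Hf1 [Hf2 Hf3]] [Hg1 [Hg2 Hg3]]. split; [|split].
  - intros n. destruct (Hf1 n) as [M1 HM1]. destruct (Hg1 n) as [M2 HM2].
    exists (Rabs a * M1 + Rabs b * M2). intros x Hx.
    eapply Rle_trans; [apply Rabs_triang|]. rewrite !Rabs_mult.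
    apply Rplus_le_compat; apply Rmult_le_compat_l; try apply Rabs_pos; auto.
  - intros eps Heps. set (d := eps / (Rabs a + Rabs b + 1)).
    assert (Hd : 0 < d) by (unfold d; apply Rdiv_lt_0_compat; [lra|]; pose proof (Rabs_pos a); pose proof (Rabs_pos b); lra).
    destruct (Hf2 d Hd) as [N1 HN1]. destruct (Hg2 d Hd) as [N2 HN2].
    exists (Nat.max N1 N2). intros n x Hn Hx.
    specialize (HN1 n x ltac:(lia) Hx). specialize (HN2 n x ltac:(lia) Hx).
    replace (a * f n x + b * g n x - (a * finf x + b * ginf x)) with (a * (f n x - finf x) + b * (g n x - ginf x)) by ring.
    eapply Rle_lt_trans; [apply Rabs_triang|]. rewrite !Rabs_mult.
    pose proof (Rabs_pos a). pose proof (Rabs_pos b).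
    assert (Rabs a * Rabs (f n x - finf x) <= Rabs a * d) by (apply Rmult_le_compat_l; lra).
    assert (Rabs b * Rabs (g n x - ginf x) <= Rabs b * d) by (apply Rmult_le_compat_l; lra).
    assert ((Rabs a + Rabs b) * d < eps).
    { unfold d. apply (Rmult_lt_reg_r (Rabs a + Rabs b + 1)); [lra|].
      replace ((Rabs a + Rabs b) * (eps / (Rabs a + Rabs b + 1)) * (Rabs a + Rabs b + 1)) with ((Rabs a + Rabs b) * eps) by (field; lra).
      nra. }
    lra.
  - apply (@ex_RInt_ext R_NormedModule (fun x => plus (scal a (finf x)) (scal b (ginf x)))).
    intros; reflexivity.
    apply (@ex_RInt_plus R_NormedModule); apply (@ex_RInt_scal R_NormedModule); auto. Qed.

Lemma y_lin alpha f g finf ginf a b t : inF f finf -> inF g ginf ->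
  y alpha (fun n x => a * f n x + b * g n x) t = a * y alpha f t + b * y alpha g t.
Proof. intros HF HG.
  destruct (inF_bound f finf HF) as [Bf HBf]. destruct (inF_bound g ginf HG) as [Bg HBg].
  pose proof (inner_ex_series alpha f Bf t (theta_bound alpha f Bf HBf)) as Ef.
  pose proof (inner_ex_series alpha g Bg t (theta_bound alpha g Bg HBg)) as Eg.
  unfold y.
  change (Series (fun n => inner alpha (fun n x => a * f n x + b * g n x) n t) =
     a * Series (fun n => inner alpha f n t) + b * Series (fun n => inner alpha g n t)).
  rewrite (Series_ext _ (fun n => a * inner alpha f n t + b * inner alpha g n t)).
  rewrite Series_plus. rewrite !Series_scal_l. reflexivity.
  apply (@ex_series_scal_l R_AbsRing R_NormedModule a (fun n => inner alpha f n t)); auto.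
  apply (@ex_series_scal_l R_AbsRing R_NormedModule b (fun n => inner alpha g n t)); auto.
  intros n. rewrite !inner_S0. rewrite <- !S0_scal, <- S0_plus. apply S0_ext. intros k _.
  unfold theta. ring. Qed.

Theorem proposition2p6 (alpha : R) (Halpha : 0 < alpha) (Hirr : irrational alpha) :
  (forall (f : nat -> R -> R) (finf : R -> R), inF f finf ->
     forall t, 0 <= t <= 1 ->
       is_lim_seq (fun n => covn n (y alpha f) (y alpha f) t)
                  (t * RInt (fun s => finf s ^ 2) 0 1)) /\
  (forall (f g : nat -> R -> R) (finf ginf : R -> R), inF f finf -> inF g ginf ->
     forall t, 0 <= t <= 1 ->
       is_lim_seq (fun n => covn n (y alpha f) (y alpha g) t)
                  (t * RInt (fun s => finf s * ginf s) 0 1)) /\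
  (forall (f g : nat -> R -> R) (finf ginf : R -> R) (a b : R),
     inF f finf -> inF g ginf ->
     inF (fun n x => a * f n x + b * g n x) (fun x => a * finf x + b * ginf x) /\
     forall t, 0 <= t <= 1 ->
       y alpha (fun n x => a * f n x + b * g n x) t = a * y alpha f t + b * y alpha g t).
Proof. split; [|split].
  - intros f finf HF t Ht.
    rewrite (@RInt_ext R_CompleteNormedModule (fun s => finf s ^ 2) (fun s => finf s * finf s)) by (intros; simpl; ring).
    apply part_b; auto.
  - intros. apply part_b; auto.
  - intros f g finf ginf a b HF HG. split. apply inF_comb; auto. intros t _. eapply y_lin; eauto. Qed.
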